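(* Let $s>-\frac12$ and $\delta>0$. There exists $\varepsilon_0>0$ such that for every $\varepsilon\in(0,\varepsilon_0)$ there exist global solutions $\tilde V_1^\varepsilon,\tilde V_2^\varepsilon\in C(\mathbb{R};H^s_+(\mathbb{R}))$ of the cubic Szeg\H{o} equation $i\partial_tV=\Pi_+(|V|^2V)$ such that $$\|\tilde V_1^\varepsilon(0)\|_{H^s}+\|\tilde V_2^\varepsilon(0)\|_{H^s}\lesssim\varepsilon,\qquad \|\tilde V_1^\varepsilon(0)-\tilde V_2^\varepsilon(0)\|_{H^s}\sim\varepsilon|\log\varepsilon|^{-1/2},$$ and $$\|\tilde V_1^\varepsilon(t)-\tilde V_2^\varepsilon(t)\|_{H^s}\gtrsim\varepsilon\quad\text{for all } t\ge\frac{\delta}{\varepsilon^2}|\log\varepsilon|.$$ (One may take $\tilde V_j^\varepsilon(t,x)=\frac{\alpha_je^{-i\omega_jt}}{x-c_jt+i}$ with $\alpha_1=\varepsilon$, $\alpha_2=\varepsilon(1+|\log\varepsilon|^{-1/2})$, $c_j=\alpha_j^2/2$, $\omega_j=\alpha_j^2/4$.)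
   Context: $\Pi_+$ is the Szeg\H{o} projector $\widehat{\Pi_+f}(\xi)=\widehat f(\xi)\mathbf 1_{\xi\ge0}$, $\widehat f(\xi)=\int e^{-ix\xi}f(x)dx$. $H^s_+(\mathbb{R})$ is the set of $f\in H^s(\mathbb{R})$ with $\operatorname{supp}\widehat f\subset[0,\infty)$, normed by $\|f\|_{H^s}=\frac1{\sqrt{2\pi}}(\int\langle\xi\rangle^{2s}|\widehat f|^2d\xi)^{1/2}$. Implicit constants are independent of $\varepsilon$ and $t$ (they may depend on $s,\delta$). *)

(* Defs.v *)
From Stdlib Require Import Reals.
Open Scope R_scope.

Definition Cplx : Type := (R * R)%type.
Definition C0 : Cplx := (0, 0).
Definition Ci : Cplx := (0, 1).
Definition Cadd (z w : Cplx) : Cplx := (fst z + fst w, snd z + snd w).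
Definition Csub (z w : Cplx) : Cplx := (fst z - fst w, snd z - snd w).
Definition Cmul (z w : Cplx) : Cplx :=
  (fst z * fst w - snd z * snd w, fst z * snd w + snd z * fst w).
Definition Cscale (r : R) (z : Cplx) : Cplx := (r * fst z, r * snd z).
Definition Cnorm2 (z : Cplx) : R := fst z * fst z + snd z * snd z.
Definition Cexpi (theta : R) : Cplx := (cos theta, sin theta).

Definition int_ab (f : R -> R) (a b l : R) : Prop :=
  exists pr : Riemann_integrable f a b, RiemannInt pr = l.

Definition improper_int (f : R -> R) (l : R) : Prop :=
  forall e, 0 < e -> exists M, 0 < M /\
    forall a b, a <= - M -> M <= b ->
      exists v, int_ab f a b v /\ Rabs (v - l) < e.

Definition cimproper_int (f : R -> Cplx) (z : Cplx) : Prop :=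
  improper_int (fun x => fst (f x)) (fst z) /\
  improper_int (fun x => snd (f x)) (snd z).

Definition L2 (f : R -> Cplx) : Prop :=
  exists l, improper_int (fun x => Cnorm2 (f x)) l.

Definition has_FT (f : R -> Cplx) (xi : R) (z : Cplx) : Prop :=
  cimproper_int (fun x => Cmul (Cexpi (- (x * xi))) (f x)) z.

(* ||f||_{H^s} = N, with
   ||f||_{H^s} = (1/sqrt(2 pi)) (int <xi>^{2s} |hat f(xi)|^2 dxi)^{1/2},
   <xi>^{2s} = (1 + xi^2)^s.  hat f is only required off the null set {0}. *)
Definition Hs_norm_is (s : R) (f : R -> Cplx) (N : R) : Prop :=
  0 <= N /\
  exists F : R -> Cplx,
    (forall xi, xi <> 0 -> has_FT f xi (F xi)) /\
    improper_int (fun xi => Rpower (1 + xi ^ 2) s * Cnorm2 (F xi))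
                 (2 * PI * N ^ 2).

(* f in H^s_+(R): finite H^s norm, Fourier support in [0, +oo).
   (We additionally require f in L^2 so that the Fourier transform given by
   improper integrals coincides a.e. with the genuine (Plancherel) one.) *)
Definition in_Hs_plus (s : R) (f : R -> Cplx) : Prop :=
  L2 f /\
  (forall xi, xi < 0 -> has_FT f xi C0) /\
  exists N, Hs_norm_is s f N.

Definition is_Pi_plus (f g : R -> Cplx) : Prop :=
  forall xi, xi <> 0 ->
    exists zf, has_FT f xi zf /\
               has_FT g xi (if Rle_dec 0 xi then zf else C0).

Definition szego_solution (s : R) (V : R -> R -> Cplx) : Prop :=
  (forall t, in_Hs_plus s (V t)) /\
  (forall t0 e, 0 < e -> exists eta, 0 < eta /\
     forall t, Rabs (t - t0) < eta ->
       exists N, Hs_norm_is s (fun x => Csub (V t x) (V t0 x)) N /\ N < e) /\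
  exists W : R -> R -> Cplx,
    (forall t x,
       derivable_pt_lim (fun tau => fst (V tau x)) t (fst (W t x)) /\
       derivable_pt_lim (fun tau => snd (V tau x)) t (snd (W t x))) /\
    (forall t,
       L2 (W t) /\
       is_Pi_plus (fun x => Cscale (Cnorm2 (V t x)) (V t x))
                  (fun x => Cmul Ci (W t x))).

(* Main.v *)
Require Import Defs.
From Stdlib Require Import Reals Lra Lia ClassicalEpsilon.
From Coquelicot Require Import Coquelicot.
Open Scope R_scope.


Lemma RInt_correct_R (f : R -> R) a b : ex_RInt f a b -> is_RInt f a b (RInt f a b).
Proof. intros H. exact (@RInt_correct R_CompleteNormedModule f a b H). Qed.
Lemma exC1 (f : R -> R) a b c : a <= b <= c -> ex_RInt f a c -> ex_RInt f a b.
Proof. exact (@ex_RInt_Chasles_1 R_CompleteNormedModule f a b c). Qed.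
Lemma exC2 (f : R -> R) a b c : a <= b <= c -> ex_RInt f a c -> ex_RInt f b c.
Proof. exact (@ex_RInt_Chasles_2 R_CompleteNormedModule f a b c). Qed.
Lemma RChasles (f : R -> R) a b c : ex_RInt f a b -> ex_RInt f b c ->
  RInt f a b + RInt f b c = RInt f a c.
Proof. exact (@RInt_Chasles R_CompleteNormedModule f a b c). Qed.
Lemma RInt_plusR (f g : R -> R) a b : ex_RInt f a b -> ex_RInt g a b ->
  RInt (fun x => f x + g x) a b = RInt f a b + RInt g a b.
Proof. exact (@RInt_plus R_CompleteNormedModule f g a b). Qed.
Lemma RInt_scalR (f : R -> R) a b l : ex_RInt f a b ->
  RInt (fun x => l * f x) a b = l * RInt f a b.
Proof. exact (@RInt_scal R_CompleteNormedModule f a b l). Qed.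
Lemma ex_RInt_plusR (f g : R -> R) a b : ex_RInt f a b -> ex_RInt g a b ->
  ex_RInt (fun x => f x + g x) a b.
Proof. exact (@ex_RInt_plus R_NormedModule f g a b). Qed.
Lemma ex_RInt_scalR (f : R -> R) a b l : ex_RInt f a b -> ex_RInt (fun x => l * f x) a b.
Proof. exact (@ex_RInt_scal R_NormedModule f a b l). Qed.

Lemma int_ab_iff f a b l : int_ab f a b l <-> is_RInt f a b l.
Proof.
  split.
  - intros [pr Hpr]. rewrite <- Hpr, <- (RInt_Reals f a b pr).
    apply RInt_correct_R. apply ex_RInt_Reals_1; exact pr.
  - intros H. exists (ex_RInt_Reals_0 f a b (ex_intro _ l H)).
    rewrite <- RInt_Reals. apply is_RInt_unique; exact H.
Qed.

Lemma improper_intro f l :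
  (forall a b, ex_RInt f a b) ->
  (forall e, 0 < e -> exists M, 0 < M /\ forall a b, a <= - M -> M <= b ->
      Rabs (RInt f a b - l) < e) -> improper_int f l.
Proof.
  intros Hex H e He. destruct (H e He) as [M [HM HH]].
  exists M; split; auto. intros a b Ha Hb. exists (RInt f a b); split.
  - apply int_ab_iff, RInt_correct_R, Hex.
  - apply HH; auto.
Qed.

Lemma improper_elim f l : improper_int f l ->
  forall e, 0 < e -> exists M, 0 < M /\ forall a b, a <= - M -> M <= b ->
      ex_RInt f a b /\ Rabs (RInt f a b - l) < e.
Proof.
  intros H e He. destruct (H e He) as [M [HM HH]]. exists M; split; auto.
  intros a b Ha Hb. destruct (HH a b Ha Hb) as [v [Hv1 Hv2]].
  apply int_ab_iff in Hv1. split. exists v; exact Hv1.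
  rewrite (is_RInt_unique _ _ _ _ Hv1). exact Hv2.
Qed.

Lemma improper_ex f l : improper_int f l -> forall a b, a <= b -> ex_RInt f a b.
Proof.
  intros H a b Hab. destruct (improper_elim f l H 1 Rlt_0_1) as [M [HM HH]].
  set (M' := Rmax M (Rmax (Rabs a) (Rabs b))).
  assert (HM1 : M <= M') by apply Rmax_l.
  assert (Ha : Rabs a <= M') by (eapply Rle_trans; [apply Rmax_l|apply Rmax_r]).
  assert (Hb : Rabs b <= M') by (eapply Rle_trans; [apply Rmax_r|apply Rmax_r]).
  destruct (HH (-M') M') as [Hex _]; try lra.
  apply Rabs_le_between in Ha. apply Rabs_le_between in Hb.
  apply exC1 with M'; [lra|].
  apply exC2 with (-M'); [lra|exact Hex].
Qed.

Lemma improper_ext f g l : (forall x, f x = g x) -> improper_int f l -> improper_int g l.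
Proof.
  intros Hfg H e He. destruct (H e He) as [M [HM HH]]. exists M; split; auto.
  intros a b Ha Hb. destruct (HH a b Ha Hb) as [v [Hv1 Hv2]]. exists v; split; auto.
  apply int_ab_iff. apply int_ab_iff in Hv1. apply is_RInt_ext with f; auto.
Qed.

Lemma improper_unique f l1 l2 : improper_int f l1 -> improper_int f l2 -> l1 = l2.
Proof.
  intros H1 H2. apply Rminus_diag_uniq. apply Rabs_eq_0.
  apply Rle_antisym; [|apply Rabs_pos].
  apply Rnot_lt_le. intros Hlt.
  set (e := Rabs (l1 - l2) / 2).
  assert (He : 0 < e) by (unfold e; lra).
  destruct (improper_elim f l1 H1 e He) as [M1 [HM1 HH1]].
  destruct (improper_elim f l2 H2 e He) as [M2 [HM2 HH2]].
  set (M := Rmax M1 M2).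
  destruct (HH1 (-M) M) as [_ A1]; try (unfold M; generalize (Rmax_l M1 M2); lra).
  destruct (HH2 (-M) M) as [_ A2]; try (unfold M; generalize (Rmax_r M1 M2); lra).
  assert (Rabs (l1 - l2) <= Rabs (RInt f (-M) M - l1) + Rabs (RInt f (-M) M - l2)).
  { replace (l1 - l2) with (-(RInt f (-M) M - l1) + (RInt f (-M) M - l2)) by ring.
    eapply Rle_trans; [apply Rabs_triang|]. rewrite Rabs_Ropp. lra. }
  unfold e in *. lra.
Qed.

Lemma improper_lin f g l1 l2 p q :
  improper_int f l1 -> improper_int g l2 ->
  improper_int (fun x => p * f x + q * g x) (p * l1 + q * l2).
Proof.
  intros H1 H2. apply improper_intro.
  - intros a b. destruct (Rle_dec a b) as [Hab|Hab].
    + apply (ex_RInt_plusR (fun x => p * f x) (fun x => q * g x)).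
      * apply (ex_RInt_scalR f a b p). eapply improper_ex; eauto.
      * apply (ex_RInt_scalR g a b q). eapply improper_ex; eauto.
    + apply ex_RInt_swap.
      apply (ex_RInt_plusR (fun x => p * f x) (fun x => q * g x)).
      * apply (ex_RInt_scalR f b a p). eapply improper_ex; eauto; lra.
      * apply (ex_RInt_scalR g b a q). eapply improper_ex; eauto; lra.
  - intros e He.
    set (e' := e / (Rabs p + Rabs q + 1)).
    assert (Hd : 0 < Rabs p + Rabs q + 1) by (generalize (Rabs_pos p) (Rabs_pos q); lra).
    assert (He' : 0 < e') by (unfold e'; apply Rdiv_lt_0_compat; lra).
    destruct (improper_elim f l1 H1 e' He') as [M1 [HM1 HH1]].
    destruct (improper_elim g l2 H2 e' He') as [M2 [HM2 HH2]].
    exists (Rmax M1 M2); split; [generalize (Rmax_l M1 M2); lra|].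
    intros a b Ha Hb.
    destruct (HH1 a b) as [E1 A1]; try (generalize (Rmax_l M1 M2); lra).
    destruct (HH2 a b) as [E2 A2]; try (generalize (Rmax_r M1 M2); lra).
    rewrite (RInt_plusR (fun x => p * f x) (fun x => q * g x)).
    2: apply (ex_RInt_scalR f a b p); auto.
    2: apply (ex_RInt_scalR g a b q); auto.
    rewrite (RInt_scalR f a b p E1), (RInt_scalR g a b q E2).
    replace (p * RInt f a b + q * RInt g a b - (p * l1 + q * l2)) with
      (p * (RInt f a b - l1) + q * (RInt g a b - l2)) by ring.
    eapply Rle_lt_trans; [apply Rabs_triang|]. rewrite !Rabs_mult.
    assert (Rabs p * Rabs (RInt f a b - l1) <= Rabs p * e')
      by (apply Rmult_le_compat_l; [apply Rabs_pos|lra]).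
    assert (Rabs q * Rabs (RInt g a b - l2) <= Rabs q * e')
      by (apply Rmult_le_compat_l; [apply Rabs_pos|lra]).
    assert ((Rabs p + Rabs q) * e' < e).
    { unfold e'. apply Rlt_le_trans with ((Rabs p + Rabs q + 1) * (e / (Rabs p + Rabs q + 1))).
      apply Rmult_lt_compat_r; [|lra]. apply Rdiv_lt_0_compat; lra.
      right. field. lra. }
    lra.
Qed.

Lemma improper_ex_all f l : improper_int f l -> forall a b, ex_RInt f a b.
Proof.
  intros H a b. destruct (Rle_dec a b).
  - eapply improper_ex; eauto.
  - apply ex_RInt_swap. eapply improper_ex; eauto; lra.
Qed.

Lemma is_RInt_shift (f : R -> R) a b c v :
  is_RInt f (a - c) (b - c) v -> is_RInt (fun x => f (x - c)) a b v.
Proof.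
  intros H.
  assert (H' : is_RInt f (1 * a + - c) (1 * b + - c) v).
  { replace (1 * a + - c) with (a - c) by ring. replace (1 * b + - c) with (b - c) by ring. exact H. }
  apply (is_RInt_comp_lin f 1 (-c) a b v) in H'.
  apply is_RInt_ext with (2 := H'). intros x _.
  change (1 * f (1 * x + - c) = f (x - c)).
  replace (1 * x + - c) with (x - c) by ring. ring.
Qed.

Lemma is_RInt_refl (f : R -> R) a b v :
  is_RInt f (- b) (- a) v -> is_RInt (fun x => f (- x)) a b v.
Proof.
  intros H. apply is_RInt_swap in H.
  assert (H' : is_RInt f (-1 * a + 0) (-1 * b + 0) (opp v)).
  { replace (-1 * a + 0) with (-a) by ring. replace (-1 * b + 0) with (-b) by ring. exact H. }
  apply (is_RInt_comp_lin f (-1) 0 a b) in H'.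
  apply (is_RInt_scal _ _ _ (-1)) in H'.
  replace v with (scal (-1) (opp v)).
  2:{ change (-1 * (- v) = v). ring. }
  apply is_RInt_ext with (2 := H'). intros x _.
  change (-1 * (-1 * f (-1 * x + 0)) = f (- x)).
  replace (-1 * x + 0) with (- x) by ring. ring.
Qed.

Lemma improper_shift f l c : improper_int f l -> improper_int (fun x => f (x - c)) l.
Proof.
  intros H. apply improper_intro.
  - intros a b. destruct (improper_ex_all f l H (a - c) (b - c)) as [v Hv].
    exists v. apply is_RInt_shift; auto.
  - intros e He. destruct (improper_elim f l H e He) as [M [HM HH]].
    exists (M + Rabs c); split. generalize (Rabs_pos c); lra.
    intros a b Ha Hb.
    destruct (HH (a - c) (b - c)) as [Hex Hl].
    generalize (Rle_abs c) (Rle_abs (-c)); rewrite Rabs_Ropp; lra.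
    generalize (Rle_abs c) (Rle_abs (-c)); rewrite Rabs_Ropp; lra.
    rewrite (is_RInt_unique (fun x => f (x - c)) a b (RInt f (a - c) (b - c))); auto.
    apply is_RInt_shift, RInt_correct_R, Hex.
Qed.

Lemma improper_refl f l : improper_int f l -> improper_int (fun x => f (- x)) l.
Proof.
  intros H. apply improper_intro.
  - intros a b. destruct (improper_ex_all f l H (- b) (- a)) as [v Hv].
    exists v. apply is_RInt_refl; auto.
  - intros e He. destruct (improper_elim f l H e He) as [M [HM HH]].
    exists M; split; auto.
    intros a b Ha Hb.
    destruct (HH (- b) (- a)) as [Hex Hl]; try lra.
    rewrite (is_RInt_unique (fun x => f (- x)) a b (RInt f (- b) (- a))); auto.
    apply is_RInt_refl, RInt_correct_R, Hex.
Qed.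

Lemma improper_odd f l : (forall x, f (- x) = - f x) -> improper_int f l -> l = 0.
Proof.
  intros Hodd H.
  assert (H1 := improper_refl f l H).
  assert (H2 := improper_lin f f l l (-1) 0 H H).
  assert (H3 : improper_int (fun x => -1 * f x + 0 * f x) l).
  { apply improper_ext with (2 := H1). intros x. rewrite Hodd. ring. }
  assert (E := improper_unique _ _ _ H2 H3). lra.
Qed.

Lemma improper_bound f l K : improper_int f l ->
  (forall a b, a <= b -> Rabs (RInt f a b) <= K) -> Rabs l <= K.
Proof.
  intros H HK. apply Rnot_lt_le. intros Hlt.
  set (e := Rabs l - K).
  assert (He : 0 < e) by (unfold e; lra).
  destruct (improper_elim f l H e He) as [M [HM HH]].
  destruct (HH (-M) M) as [_ A]; try lra.
  assert (B := HK (-M) M ltac:(lra)).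
  assert (Rabs l <= Rabs (RInt f (-M) M) + Rabs (RInt f (-M) M - l)).
  { replace l with (RInt f (-M) M - (RInt f (-M) M - l)) at 1 by ring.
    eapply Rle_trans; [apply Rabs_triang|]. rewrite Rabs_Ropp. lra. }
  unfold e in *; lra.
Qed.

Lemma improper_ge f l g l' : improper_int f l -> improper_int g l' ->
  (forall x, f x <= g x) -> l <= l'.
Proof.
  intros H1 H2 Hfg. apply Rnot_lt_le. intros Hlt.
  set (e := (l - l') / 2).
  assert (He : 0 < e) by (unfold e; lra).
  destruct (improper_elim f l H1 e He) as [M1 [HM1 HH1]].
  destruct (improper_elim g l' H2 e He) as [M2 [HM2 HH2]].
  set (M := Rmax M1 M2).
  destruct (HH1 (-M) M) as [E1 A1]; try (unfold M; generalize (Rmax_l M1 M2); lra).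
  destruct (HH2 (-M) M) as [E2 A2]; try (unfold M; generalize (Rmax_r M1 M2); lra).
  assert (RInt f (-M) M <= RInt g (-M) M).
  { apply RInt_le; auto. unfold M; generalize (Rmax_l M1 M2); lra. }
  apply Rabs_def2 in A1. apply Rabs_def2 in A2. unfold e in *; lra.
Qed.

Lemma improper_lower f l a b : improper_int f l -> (forall x, 0 <= f x) -> a <= b ->
  RInt f a b <= l.
Proof.
  intros H Hpos Hab. apply Rnot_lt_le. intros Hlt.
  set (e := RInt f a b - l).
  assert (He : 0 < e) by (unfold e; lra).
  destruct (improper_elim f l H e He) as [M1 [HM1 HH1]].
  set (M := Rmax M1 (Rmax (Rabs a) (Rabs b))).
  assert (HM : M1 <= M) by apply Rmax_l.
  assert (Ha : Rabs a <= M) by (eapply Rle_trans; [apply Rmax_l|apply Rmax_r]).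
  assert (Hb : Rabs b <= M) by (eapply Rle_trans; [apply Rmax_r|apply Rmax_r]).
  apply Rabs_le_between in Ha. apply Rabs_le_between in Hb.
  destruct (HH1 (-M) M) as [E A]; try lra.
  assert (Ea : ex_RInt f (-M) a) by (apply exC1 with M; [lra|auto]).
  assert (Eb : ex_RInt f a M) by (apply exC2 with (-M); [lra|auto]).
  assert (Eab : ex_RInt f a b) by (apply exC1 with M; [lra|auto]).
  assert (Eb2 : ex_RInt f b M) by (apply exC2 with a; [lra|auto]).
  rewrite <- (RChasles f (-M) a M) in A; auto.
  rewrite <- (RChasles f a b M) in A; auto.
  assert (0 <= RInt f (-M) a) by (apply RInt_ge_0; auto; lra).
  assert (0 <= RInt f b M) by (apply RInt_ge_0; auto; lra).
  apply Rabs_def2 in A. unfold e in *; lra.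
Qed.

Lemma improper_nonneg f l : improper_int f l -> (forall x, 0 <= f x) -> 0 <= l.
Proof.
  intros H Hp. assert (A := improper_lower f l 0 0 H Hp (Rle_refl 0)).
  rewrite RInt_point in A. exact A.
Qed.

Lemma contR (f : R -> R) x : ex_derive f x -> continuous f x.
Proof. intros H. exact (@ex_derive_continuous R_AbsRing R_NormedModule f x H). Qed.

Ltac sd := repeat match goal with
  | |- _ /\ _ => split
  | |- True => exact I
  | |- ?a * ?b <> 0 => apply Rmult_integral_contrapositive_currified
  | |- ?a ^ _ <> 0 => apply pow_nonzero
  | |- _ <> _ => first [assumption | let H := fresh in intro H]
  end; try lra; try nra.

Lemma improper_val f l l' : l = l' -> improper_int f l -> improper_int f l'.
Proof. intros ->; auto. Qed.


Lemma abs_RInt_bound (f g : R -> R) p q v : p <= q -> ex_RInt f p q -> is_RInt g p q v ->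
  (forall x, p < x < q -> Rabs (f x) <= g x) -> Rabs (RInt f p q) <= v.
Proof.
  intros Hpq Hf Hg Hb.
  assert (Eg : ex_RInt g p q) by (exists v; auto).
  assert (Ig : RInt g p q = v) by (apply is_RInt_unique; auto).
  assert (Hg' : is_RInt (fun x => - g x) p q (- v)) by (apply (is_RInt_opp g p q v Hg)).
  assert (Eg' : ex_RInt (fun x => - g x) p q) by (exists (-v); auto).
  assert (Ig' : RInt (fun x => - g x) p q = - v) by (apply is_RInt_unique; auto).
  apply Rabs_le. split.
  - rewrite <- Ig'. apply RInt_le; auto. intros x Hx. specialize (Hb x Hx).
    apply Rabs_le_between in Hb. lra.
  - rewrite <- Ig. apply RInt_le; auto. intros x Hx. specialize (Hb x Hx).
    apply Rabs_le_between in Hb. lra.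
Qed.

Lemma is_RInt_invsq K p q : 0 < p <= q ->
  is_RInt (fun x => K / x ^ 2) p q (K / p - K / q).
Proof.
  intros Hpq.
  replace (K / p - K / q) with (minus ((fun x => - K / x) q) ((fun x => - K / x) p)).
  2:{ unfold minus, plus, opp; simpl. field. lra. }
  apply (is_RInt_derive (fun x => - K / x) (fun x => K / x ^ 2)).
  - intros x Hx. rewrite Rmin_left in Hx by lra. rewrite Rmax_right in Hx by lra.
    auto_derive; sd. field. lra.
  - intros x Hx. rewrite Rmin_left in Hx by lra. rewrite Rmax_right in Hx by lra.
    apply contR. auto_derive; sd.
Qed.

Lemma is_RInt_invsq_neg K p q : 0 < p <= q ->
  is_RInt (fun x => K / x ^ 2) (- q) (- p) (K / p - K / q).
Proof.
  intros Hpq.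
  replace (K / p - K / q) with (minus ((fun x => - K / x) (-p)) ((fun x => - K / x) (-q))).
  2:{ unfold minus, plus, opp; simpl. field. lra. }
  apply (is_RInt_derive (fun x => - K / x) (fun x => K / x ^ 2)).
  - intros x Hx. rewrite Rmin_left in Hx by lra. rewrite Rmax_right in Hx by lra.
    auto_derive; sd. field. lra.
  - intros x Hx. rewrite Rmin_left in Hx by lra. rewrite Rmax_right in Hx by lra.
    apply contR. auto_derive; sd.
Qed.

Section Dom.
Variable f : R -> R.
Variable K : R.
Hypothesis Hex : forall a b, ex_RInt f a b.
Hypothesis Hdom : forall x, Rabs (f x) <= K / (1 + x ^ 2).

Lemma dom_K : 0 <= K.
Proof. generalize (Hdom 0) (Rabs_pos (f 0)). intros A B.
  replace (K / (1 + 0 ^ 2)) with K in A by (simpl; field). lra. Qed.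

Lemma dom_sq x : x <> 0 -> Rabs (f x) <= K / x ^ 2.
Proof.
  intros Hx. eapply Rle_trans; [apply Hdom|]. apply Rmult_le_compat_l. apply dom_K.
  apply Rinv_le_contravar. apply pow2_gt_0; auto. lra.
Qed.

Lemma tail_pos p q : 0 < p <= q -> Rabs (RInt f p q) <= K / p.
Proof.
  intros Hpq. eapply Rle_trans.
  apply (abs_RInt_bound f (fun x => K / x ^ 2) p q (K / p - K / q)); try lra; auto.
  apply is_RInt_invsq; auto.
  intros x Hx. apply dom_sq. lra.
  assert (0 <= K / q) by (apply Rdiv_le_0_compat; [apply dom_K|lra]). lra.
Qed.

Lemma tail_neg p q : 0 < p <= q -> Rabs (RInt f (- q) (- p)) <= K / p.
Proof.
  intros Hpq. eapply Rle_trans.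
  apply (abs_RInt_bound f (fun x => K / x ^ 2) (-q) (-p) (K / p - K / q)); try lra; auto.
  apply is_RInt_invsq_neg; auto.
  intros x Hx. apply dom_sq. lra.
  assert (0 <= K / q) by (apply Rdiv_le_0_compat; [apply dom_K|lra]). lra.
Qed.

Definition useq (n : nat) := RInt f (- INR n) (INR n).

Lemma useq_diff n m : (1 <= n <= m)%nat -> Rabs (useq m - useq n) <= 2 * K / INR n.
Proof.
  intros Hnm. unfold useq.
  assert (Hn : 1 <= INR n) by (replace 1 with (INR 1) by reflexivity; apply le_INR; lia).
  assert (Hm : INR n <= INR m) by (apply le_INR; lia).
  rewrite <- (RChasles f (- INR m) (- INR n) (INR m)); auto.
  rewrite <- (RChasles f (- INR n) (INR n) (INR m)); auto.
  replace (RInt f (- INR m) (- INR n) + (RInt f (- INR n) (INR n) + RInt f (INR n) (INR m)) -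
    RInt f (- INR n) (INR n)) with (RInt f (- INR m) (- INR n) + RInt f (INR n) (INR m)) by ring.
  eapply Rle_trans; [apply Rabs_triang|].
  assert (A := tail_neg (INR n) (INR m) ltac:(lra)).
  assert (B := tail_pos (INR n) (INR m) ltac:(lra)).
  replace (2 * K / INR n) with (K / INR n + K / INR n) by (field; lra). lra.
Qed.

Lemma useq_cauchy : Cauchy_crit useq.
Proof.
  intros eps Heps.
  destruct (archimed_cor1 (eps / (2 * K + 1))) as [N [HN HN0]].
  apply Rdiv_lt_0_compat; [lra|generalize dom_K; lra].
  exists N. intros n m Hn Hm.
  assert (HK := dom_K).
  assert (HNpos : 0 < INR N) by (apply lt_0_INR; lia).
  assert (HNn : INR N <= INR n) by (apply le_INR; lia).
  assert (HNm : INR N <= INR m) by (apply le_INR; lia).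
  assert (Hb : 2 * K / INR N < eps).
  { assert (2*K/INR N <= (2*K+1) * / INR N) by (unfold Rdiv; apply Rmult_le_compat_r; [left; apply Rinv_0_lt_compat; lra | lra]).
    assert (A : (2*K+1) * / INR N < (2*K+1) * (eps/(2*K+1))) by (apply Rmult_lt_compat_l; lra).
    replace ((2*K+1)*(eps/(2*K+1))) with eps in A by (field; lra). lra. }
  unfold Rdist. destruct (Compare_dec.le_lt_dec n m).
  - rewrite <- Rabs_Ropp. replace (- (useq n - useq m)) with (useq m - useq n) by ring.
    eapply Rle_lt_trans. apply useq_diff; lia.
    eapply Rle_lt_trans; [|exact Hb].
    unfold Rdiv. apply Rmult_le_compat_l; [lra|]. apply Rinv_le_contravar; lra.
  - eapply Rle_lt_trans. apply useq_diff; lia.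
    eapply Rle_lt_trans; [|exact Hb].
    unfold Rdiv. apply Rmult_le_compat_l; [lra|]. apply Rinv_le_contravar; lra.
Qed.

Lemma improper_dom : exists l, improper_int f l.
Proof.
  destruct (Rcomplete.R_complete useq useq_cauchy) as [l Hl].
  exists l. apply improper_intro; auto.
  intros e He.
  assert (HK := dom_K).
  destruct (Hl (e / 2)) as [N1 HN1]; [lra|].
  destruct (archimed_cor1 (e / (4 * K + 1))) as [N2 [HN2 HN20]].
  apply Rdiv_lt_0_compat; lra.
  set (N := max N1 N2).
  assert (HNpos : 0 < INR N) by (apply lt_0_INR; unfold N; lia).
  assert (HN2N : INR N2 <= INR N) by (apply le_INR; unfold N; lia).
  assert (HN2pos : 0 < INR N2) by (apply lt_0_INR; lia).
  assert (Hb : 2 * K / INR N < e / 2).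
  { apply Rle_lt_trans with (2 * K / INR N2).
    unfold Rdiv. apply Rmult_le_compat_l; [lra|]. apply Rinv_le_contravar; lra.
    apply Rmult_lt_reg_r with (/ (4 * K + 1)). apply Rinv_0_lt_compat; lra.
    apply Rle_lt_trans with (/ INR N2 * / 2).
    2:{ replace (e / 2 * / (4 * K + 1)) with (e / (4 * K + 1) * / 2) by (field; lra). lra. }
    replace (2 * K / INR N2 * / (4 * K + 1)) with (/ INR N2 * (2 * K / (4 * K + 1))) by (field; lra).
    apply Rmult_le_compat_l. left; apply Rinv_0_lt_compat; lra.
    apply Rmult_le_reg_r with (4 * K + 1); [lra|].
    replace (2 * K / (4 * K + 1) * (4 * K + 1)) with (2 * K) by (field; lra). lra. }
  exists (INR N). split; auto. intros a b Ha Hb'.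
  rewrite <- (RChasles f a (- INR N) b); auto.
  rewrite <- (RChasles f (- INR N) (INR N) b); auto.
  assert (A := tail_neg (INR N) (- a) ltac:(lra)). rewrite Ropp_involutive in A.
  assert (B := tail_pos (INR N) b ltac:(lra)).
  assert (C := HN1 N ltac:(unfold N; lia)). unfold Rdist, useq in C.
  replace (RInt f a (- INR N) + (RInt f (- INR N) (INR N) + RInt f (INR N) b) - l) with
    (RInt f a (- INR N) + RInt f (INR N) b + (RInt f (- INR N) (INR N) - l)) by ring.
  eapply Rle_lt_trans; [apply Rabs_triang|].
  eapply Rle_lt_trans; [apply Rplus_le_compat_r; apply Rabs_triang|].
  replace (2 * K / INR N) with (K / INR N + K / INR N) in Hb by (field; lra). lra.
Qed.

End Dom.


Lemma exRc (f : R -> R) a b : (forall x, continuous f x) -> ex_RInt f a b.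
Proof. intros H. apply (@ex_RInt_continuous R_CompleteNormedModule). intros; apply H. Qed.

Lemma sin_abs_le x : Rabs (sin x) <= Rabs x.
Proof.
  assert (Hp : forall y, 0 <= y -> Rabs (sin y) <= y).
  { intros y Hy. destruct (Req_dec y 0) as [->|Hy0]. rewrite sin_0, Rabs_R0; lra.
    assert (A := sin_lt_x y ltac:(lra)).
    destruct (Rle_dec y 1).
    - assert (0 <= sin y) by (apply sin_ge_0; generalize PI2_3_2; lra).
      rewrite Rabs_right; lra.
    - generalize (SIN_bound y). intros. apply Rabs_le; lra. }
  destruct (Rle_dec 0 x).
  - rewrite (Rabs_right x) by lra. apply Hp; lra.
  - assert (B := Hp (-x) ltac:(lra)). rewrite sin_neg, Rabs_Ropp in B.
    rewrite (Rabs_left x) by lra. lra.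
Qed.

Lemma cos_lb x : 1 - x ^ 2 / 2 <= cos x.
Proof.
  replace x with (2 * (x / 2)) at 2 by field. rewrite cos_2a_sin.
  assert (A := sin_abs_le (x / 2)).
  assert (E1 : sin (x/2) * sin (x/2) = Rabs (sin (x/2)) * Rabs (sin (x/2))).
  { rewrite <- Rabs_mult. rewrite Rabs_right; [reflexivity|]. apply Rle_ge; nra. }
  assert (E2 : (x/2) * (x/2) = Rabs (x/2) * Rabs (x/2)).
  { rewrite <- Rabs_mult. rewrite Rabs_right; [reflexivity|]. apply Rle_ge; nra. }
  generalize (Rabs_pos (sin (x/2))). intros.
  nra.
Qed.

Lemma frac_bound1 x : Rabs x / (1 + x ^ 2) <= 1 / 2.
Proof.
  assert (0 < 1 + x^2) by (generalize (pow2_ge_0 x); lra).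
  apply Rmult_le_reg_r with (1 + x^2); auto. unfold Rdiv. rewrite Rmult_assoc, Rinv_l by lra.
  assert (Rabs x ^ 2 = x ^ 2) by (rewrite RPow_abs; apply Rabs_right; apply Rle_ge; apply pow2_ge_0).
  generalize (Rabs_pos x). intros. assert (0 <= (Rabs x - 1)^2) by apply pow2_ge_0.
  simpl in *. nra.
Qed.

Lemma frac_bound2 x : Rabs x / (1 + x ^ 2) <= 2 / (1 + Rabs x).
Proof.
  assert (0 < 1 + x^2) by (generalize (pow2_ge_0 x); lra).
  assert (Rabs x ^ 2 = x ^ 2) by (rewrite RPow_abs; apply Rabs_right; apply Rle_ge; apply pow2_ge_0).
  generalize (Rabs_pos x). intros.
  unfold Rdiv. apply Rmult_le_reg_r with ((1 + x^2) * (1 + Rabs x)). nra.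
  replace (Rabs x * / (1 + x ^ 2) * ((1 + x ^ 2) * (1 + Rabs x))) with (Rabs x * (1 + Rabs x)) by (field; lra).
  replace (2 * / (1 + Rabs x) * ((1 + x ^ 2) * (1 + Rabs x))) with (2 * (1 + x^2)) by (field; lra).
  nra.
Qed.

Lemma atan_int a b : a <= b -> is_RInt (fun x => 1 / (1 + x ^ 2)) a b (atan b - atan a).
Proof.
  intros Hab.
  replace (atan b - atan a) with (minus (atan b) (atan a)) by reflexivity.
  apply (is_RInt_derive atan (fun x => 1 / (1 + x ^ 2))).
  - intros x _. apply is_derive_Reals. replace (1 / (1 + x^2)) with (/ (1 + x^2)) by (unfold Rdiv; ring).
    apply derivable_pt_lim_atan.
  - intros x _. apply contR. auto_derive. generalize (pow2_ge_0 x); simpl; lra.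
Qed.

Lemma dom_RInt_bound (f : R -> R) K a b : a <= b -> ex_RInt f a b ->
  (forall x, Rabs (f x) <= K / (1 + x ^ 2)) -> Rabs (RInt f a b) <= K * PI.
Proof.
  intros Hab Hex Hd.
  assert (HK : 0 <= K) by (generalize (Hd 0) (Rabs_pos (f 0)); simpl; intros A B;
    replace (K / (1 + 0 * 1)) with K in A by field; lra).
  eapply Rle_trans.
  apply (abs_RInt_bound f (fun x => K * (1 / (1 + x ^ 2))) a b (K * (atan b - atan a))); auto.
  apply (is_RInt_scal (V := R_NormedModule)). apply atan_int; auto.
  intros x _. rewrite Rmult_div_assoc, Rmult_1_r. apply Hd.
  apply Rmult_le_compat_l; auto. generalize (atan_bound a) (atan_bound b). lra.
Qed.

Lemma improper_deriv (B b' g : R -> R) lg K :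
  (forall x, is_derive B x (b' x)) -> (forall x, continuous b' x) ->
  (forall x, Rabs (B x) <= K / (1 + Rabs x)) ->
  improper_int g lg -> improper_int (fun x => b' x + g x) lg.
Proof.
  intros HB Hc HBb Hg.
  assert (HK : 0 <= K) by (generalize (HBb 0) (Rabs_pos (B 0)); rewrite Rabs_R0;
    intros A C; replace (K / (1 + 0)) with K in A by field; lra).
  assert (HI : forall a b, is_RInt b' a b (B b - B a)).
  { intros a b. apply (is_RInt_derive B b'); intros; auto. }
  apply improper_intro.
  - intros a b. apply ex_RInt_plusR. exists (B b - B a); auto. apply (improper_ex_all g lg Hg).
  - intros e He. destruct (improper_elim g lg Hg (e / 2)) as [M [HM HH]]. lra.
    exists (Rmax M (4 * K / e)). split. generalize (Rmax_l M (4 * K / e)); lra.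
    intros a b Ha Hb.
    destruct (HH a b) as [Ex A]; try (generalize (Rmax_l M (4 * K / e)); lra).
    rewrite RInt_plusR; [|exists (B b - B a); auto|auto].
    rewrite (is_RInt_unique _ _ _ _ (HI a b)).
    assert (T : forall y, 4 * K / e <= Rabs y -> Rabs (B y) < e / 4).
    { intros y Hy. eapply Rle_lt_trans; [apply HBb|].
      apply Rmult_lt_reg_r with (1 + Rabs y). generalize (Rabs_pos y); lra.
      unfold Rdiv. rewrite Rmult_assoc, Rinv_l by (generalize (Rabs_pos y); lra).
      assert (K <= e / 4 * Rabs y).
      { apply Rmult_le_reg_r with (4 / e). apply Rdiv_lt_0_compat; lra.
        replace (e / 4 * Rabs y * (4 / e)) with (Rabs y) by (field; lra).
        replace (K * (4 / e)) with (4 * K / e) by (field; lra). lra. }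
      lra. }
    assert (Ta := T a). assert (Tb := T b).
    assert (4 * K / e <= Rabs a).
    { generalize (Rmax_r M (4 * K / e)). rewrite Rabs_left1 by (generalize (Rmax_l M (4*K/e)); lra). lra. }
    assert (4 * K / e <= Rabs b).
    { generalize (Rmax_r M (4 * K / e)). rewrite Rabs_right by (generalize (Rmax_l M (4*K/e)); lra). lra. }
    specialize (Ta ltac:(auto)). specialize (Tb ltac:(auto)).
    replace (B b - B a + RInt g a b - lg) with (B b - B a + (RInt g a b - lg)) by ring.
    eapply Rle_lt_trans; [apply Rabs_triang|].
    eapply Rle_lt_trans; [apply Rplus_le_compat_r; apply Rabs_triang|]. rewrite Rabs_Ropp. lra.
Qed.


Lemma pos1x2 x : 0 < 1 + x ^ 2.
Proof. generalize (pow2_ge_0 x); lra. Qed.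

Lemma dom_frac1 p K x : Rabs p <= K -> Rabs (p / (1 + x ^ 2)) <= K / (1 + x ^ 2).
Proof.
  intros H. assert (A := pos1x2 x). unfold Rdiv. rewrite Rabs_mult.
  rewrite (Rabs_right (/ _)) by (apply Rle_ge; left; apply Rinv_0_lt_compat; auto).
  apply Rmult_le_compat_r; auto. left; apply Rinv_0_lt_compat; auto.
Qed.

Lemma dom_frac2 p c K x : c <> 0 -> Rabs p <= K * (1 + x ^ 2) ->
  Rabs (p / (c * (1 + x ^ 2) ^ 2)) <= (K / Rabs c) / (1 + x ^ 2).
Proof.
  intros Hc H. assert (A := pos1x2 x).
  assert (Ac : 0 < Rabs c) by (apply Rabs_pos_lt; auto).
  unfold Rdiv. rewrite Rabs_mult, Rabs_Rinv, Rabs_mult by (apply Rmult_integral_contrapositive; split; auto; apply pow_nonzero; lra).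
  rewrite (Rabs_right ((1 + x^2)^2)) by (apply Rle_ge; apply pow2_ge_0).
  apply Rmult_le_reg_r with (Rabs c * (1 + x ^ 2) ^ 2). apply Rmult_lt_0_compat; auto. apply pow2_gt_0; lra.
  replace (Rabs p * / (Rabs c * (1 + x ^ 2) ^ 2) * (Rabs c * (1 + x ^ 2) ^ 2)) with (Rabs p) by (field; split; lra).
  replace (K * / Rabs c * / (1 + x ^ 2) * (Rabs c * (1 + x ^ 2) ^ 2)) with (K * (1 + x^2)) by (field; split; lra).
  auto.
Qed.

Lemma dom_plus f g K1 K2 x : Rabs f <= K1 / (1 + x ^ 2) -> Rabs g <= K2 / (1 + x ^ 2) ->
  Rabs (f + g) <= (K1 + K2) / (1 + x ^ 2).
Proof.
  intros A B. eapply Rle_trans; [apply Rabs_triang|].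
  replace ((K1 + K2) / (1 + x ^ 2)) with (K1 / (1 + x ^ 2) + K2 / (1 + x^2)) by (field; generalize (pos1x2 x); lra).
  lra.
Qed.

Lemma abs_1mx2 x : Rabs (1 - x ^ 2) <= 1 + x ^ 2.
Proof. generalize (pow2_ge_0 x). intros. apply Rabs_le. lra. Qed.

Lemma abs_cos_le x : Rabs (cos x) <= 1.
Proof. generalize (COS_bound x). intros. apply Rabs_le. lra. Qed.
Lemma abs_sin_le x : Rabs (sin x) <= 1.
Proof. generalize (SIN_bound x). intros. apply Rabs_le. lra. Qed.

Lemma abs_prod_le a b A B : Rabs a <= A -> Rabs b <= B -> Rabs (a * b) <= A * B.
Proof.
  intros. rewrite Rabs_mult. apply Rmult_le_compat; auto; apply Rabs_pos.
Qed.

Definition qf (xi x : R) := (cos (x * xi) + x * sin (x * xi)) / (1 + x ^ 2).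

Definition qB xi x := - x * cos (x * xi) / (xi * (1 + x ^ 2)).
Definition qb' xi x := x * sin (x * xi) / (1 + x ^ 2) - (1 - x ^ 2) * cos (x * xi) / (xi * (1 + x ^ 2) ^ 2).
Definition qg xi x := cos (x * xi) / (1 + x ^ 2) + (1 - x ^ 2) * cos (x * xi) / (xi * (1 + x ^ 2) ^ 2).

Lemma qg_dom xi x : xi <> 0 -> Rabs (qg xi x) <= (1 + 1 / Rabs xi) / (1 + x ^ 2).
Proof.
  intros Hxi. unfold qg. apply dom_plus.
  apply dom_frac1, abs_cos_le.
  apply dom_frac2; auto. rewrite Rmult_comm. apply (abs_prod_le _ _ 1 (1 + x^2)).
  apply abs_cos_le. apply abs_1mx2.
Qed.

Lemma qg_cont xi x : xi <> 0 -> continuous (qg xi) x.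
Proof. intros Hxi. apply contR. unfold qg. auto_derive. pose proof (pos1x2 x); sd. Qed.

Lemma qB_deriv xi x : xi <> 0 -> is_derive (qB xi) x (qb' xi x).
Proof.
  intros Hxi. unfold qB, qb'. assert (A := pos1x2 x). auto_derive. sd.
  field. split; auto; lra.
Qed.

Lemma qb'_cont xi x : xi <> 0 -> continuous (qb' xi) x.
Proof. intros Hxi. apply contR. unfold qb'. auto_derive. pose proof (pos1x2 x); sd. Qed.

Lemma abs_frac p x : Rabs (p / (1 + x ^ 2)) = Rabs p / (1 + x ^ 2).
Proof.
  unfold Rdiv. rewrite Rabs_mult. f_equal. apply Rabs_right. apply Rle_ge; left; apply Rinv_0_lt_compat, pos1x2.
Qed.

Lemma qB_bound xi x : xi <> 0 -> Rabs (qB xi x) <= (1 / (2 * Rabs xi)).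
Proof.
  intros Hxi. assert (A := pos1x2 x). assert (Ax : 0 < Rabs xi) by (apply Rabs_pos_lt; auto).
  unfold qB. replace (- x * cos (x * xi) / (xi * (1 + x ^ 2))) with
    ((x / (1 + x ^ 2)) * (- cos (x * xi)) * / xi) by (field; split; lra).
  rewrite Rabs_mult, Rabs_mult, Rabs_Ropp, Rabs_Rinv by auto. rewrite abs_frac.
  assert (B := frac_bound1 x).
  assert (C := abs_cos_le (x * xi)).
  replace (1 / (2 * Rabs xi)) with (1 / 2 * 1 * / Rabs xi) by (field; lra).
  apply Rmult_le_compat_r. left; apply Rinv_0_lt_compat; auto.
  apply Rmult_le_compat; auto; try apply Rabs_pos.
  unfold Rdiv; apply Rmult_le_pos; [apply Rabs_pos|left; apply Rinv_0_lt_compat; auto].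
Qed.

Lemma qB_bound2 xi x : xi <> 0 -> Rabs (qB xi x) <= (2 / Rabs xi) / (1 + Rabs x).
Proof.
  intros Hxi. assert (A := pos1x2 x). assert (Ax : 0 < Rabs xi) by (apply Rabs_pos_lt; auto).
  unfold qB. replace (- x * cos (x * xi) / (xi * (1 + x ^ 2))) with
    ((x / (1 + x ^ 2)) * (- cos (x * xi)) * / xi) by (field; split; lra).
  rewrite Rabs_mult, Rabs_mult, Rabs_Ropp, Rabs_Rinv by auto. rewrite abs_frac.
  assert (B := frac_bound2 x).
  assert (C := abs_cos_le (x * xi)).
  replace (2 / Rabs xi / (1 + Rabs x)) with (2 / (1 + Rabs x) * 1 * / Rabs xi) by (field; generalize (Rabs_pos x); lra).
  apply Rmult_le_compat_r. left; apply Rinv_0_lt_compat; auto.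
  apply Rmult_le_compat; auto; try apply Rabs_pos.
  unfold Rdiv; apply Rmult_le_pos; [apply Rabs_pos|left; apply Rinv_0_lt_compat; auto].
Qed.

Lemma qf_split xi x : xi <> 0 -> qf xi x = qb' xi x + qg xi x.
Proof. intros Hxi. unfold qf, qb', qg. field. generalize (pos1x2 x); lra. Qed.

Lemma qg_improper xi : xi <> 0 -> exists l, improper_int (qg xi) l.
Proof.
  intros Hxi. apply (improper_dom _ (1 + 1 / Rabs xi)).
  intros a b; apply exRc; intros; apply qg_cont; auto.
  intros x; apply qg_dom; auto.
Qed.

Lemma qf_improper xi : xi <> 0 -> exists l, improper_int (qf xi) l.
Proof.
  intros Hxi. destruct (qg_improper xi Hxi) as [l Hl]. exists l.
  apply improper_ext with (fun x => qb' xi x + qg xi x).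
  intros; rewrite qf_split; auto.
  apply (improper_deriv (qB xi) (qb' xi) (qg xi) l (2 / Rabs xi)); auto.
  intros; apply qB_deriv; auto. intros; apply qb'_cont; auto. intros; apply qB_bound2; auto.
Qed.

Definition Qv (xi : R) : R := epsilon (inhabits 0) (fun l => improper_int (qf xi) l).

Lemma Qv_spec xi : xi <> 0 -> improper_int (qf xi) (Qv xi).
Proof.
  intros Hxi. unfold Qv. apply epsilon_spec. apply qf_improper; auto.
Qed.

Lemma Qv_bound xi : xi <> 0 -> Rabs (Qv xi) <= 1 / Rabs xi + (1 + 1 / Rabs xi) * PI.
Proof.
  intros Hxi. apply (improper_bound (qf xi)). apply Qv_spec; auto.
  intros a b Hab.
  assert (Ex : ex_RInt (qg xi) a b) by (apply exRc; intros; apply qg_cont; auto).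
  assert (Eb : is_RInt (qb' xi) a b (qB xi b - qB xi a)).
  { apply (is_RInt_derive (qB xi) (qb' xi)); intros; [apply qB_deriv|apply qb'_cont]; auto. }
  rewrite (RInt_ext _ (fun x => qb' xi x + qg xi x)) by (intros; apply qf_split; auto).
  rewrite RInt_plusR; auto. 2: exists (qB xi b - qB xi a); auto.
  rewrite (is_RInt_unique _ _ _ _ Eb).
  assert (A1 := qB_bound xi b Hxi). assert (A2 := qB_bound xi a Hxi).
  assert (A3 := dom_RInt_bound (qg xi) (1 + 1 / Rabs xi) a b Hab Ex (fun x => qg_dom xi x Hxi)).
  eapply Rle_trans; [apply Rabs_triang|].
  eapply Rle_trans; [apply Rplus_le_compat_r; apply Rabs_triang|]. rewrite Rabs_Ropp.
  assert (Ax : 0 < Rabs xi) by (apply Rabs_pos_lt; auto).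
  replace (1 / Rabs xi) with (1 / (2 * Rabs xi) + 1 / (2 * Rabs xi)) at 1 by (field; lra).
  lra.
Qed.


Definition dq (u t : R) := (- t * sin (t * u) + t ^ 2 * cos (t * u)) / (1 + t ^ 2).

Lemma Derive_qf u t : Derive (fun z => qf z t) u = dq u t.
Proof.
  apply is_derive_unique. unfold qf, dq. pose proof (pos1x2 t). auto_derive. sd.
  field. lra.
Qed.

Lemma cont2_dq u t : continuity_2d_pt dq u t.
Proof.
  unfold dq.
  assert (Hvu : forall x y, continuity_2d_pt (fun u v : R => v * u) x y).
  { intros. apply continuity_2d_pt_mult; [apply continuity_2d_pt_id2|apply continuity_2d_pt_id1]. }
  apply continuity_2d_pt_ext with (fun u v => (- v * sin (v * u) + v * v * cos (v * u)) * / (1 + v * v)).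
  { intros x y. field. pose proof (pow2_ge_0 y). simpl in *. nra. }
  apply continuity_2d_pt_mult.
  - apply continuity_2d_pt_plus.
    + apply continuity_2d_pt_mult.
      * apply continuity_2d_pt_opp, continuity_2d_pt_id2.
      * apply (continuity_1d_2d_pt_comp sin (fun u v => v * u)). apply continuity_sin. apply Hvu.
    + apply continuity_2d_pt_mult.
      * apply continuity_2d_pt_mult; apply continuity_2d_pt_id2.
      * apply (continuity_1d_2d_pt_comp cos (fun u v => v * u)). apply continuity_cos. apply Hvu.
  - apply continuity_2d_pt_inv.
    + apply continuity_2d_pt_plus. apply continuity_2d_pt_const.
      apply continuity_2d_pt_mult; apply continuity_2d_pt_id2.
    + pose proof (pow2_ge_0 t). simpl in *. nra.
Qed.

Definition Xf (R0 u : R) := RInt (qf u) (- R0) R0.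

Lemma qf_cont u x : continuous (qf u) x.
Proof. apply contR. unfold qf. pose proof (pos1x2 x). auto_derive. sd. Qed.

Lemma cos_int xi R0 : xi <> 0 -> is_RInt (fun t => cos (t * xi)) (- R0) R0 (2 * sin (R0 * xi) / xi).
Proof.
  intros Hxi.
  replace (2 * sin (R0 * xi) / xi) with (minus (sin (R0 * xi) / xi) (sin (- R0 * xi) / xi)).
  2:{ unfold minus, plus, opp; simpl. replace (- R0 * xi) with (- (R0 * xi)) by ring. rewrite sin_neg. field; auto. }
  apply (is_RInt_derive (fun t => sin (t * xi) / xi)).
  - intros x _. auto_derive. auto. field. auto.
  - intros x _. apply contR. auto_derive. auto.
Qed.

Lemma Xf_deriv R0 xi : xi <> 0 ->
  is_derive (Xf R0) xi (- Xf R0 xi + 2 * sin (R0 * xi) / xi).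
Proof.
  intros Hxi. unfold Xf.
  assert (H := is_derive_RInt_param (fun u t => qf u t) (- R0) R0 xi).

  replace (- RInt (qf xi) (- R0) R0 + 2 * sin (R0 * xi) / xi) with
    (RInt (fun t => Derive (fun u => qf u t) xi) (- R0) R0).
  - apply H.
    + apply filter_forall. intros x0 t _. unfold qf. pose proof (pos1x2 t). auto_derive. sd.
    + intros t _. apply continuity_2d_pt_ext with dq.
      intros; rewrite Derive_qf; auto. apply cont2_dq.
    + apply filter_forall. intros y. apply exRc. intros; apply qf_cont.
  - rewrite (RInt_ext _ (fun t => -1 * qf xi t + cos (t * xi))).
    2:{ intros x _. rewrite Derive_qf. unfold dq, qf. match goal with |- ?a = ?b => change (@eq R a b) end. field. pose proof (pos1x2 x); sd. }
    rewrite RInt_plusR. rewrite RInt_scalR.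
    rewrite (is_RInt_unique _ _ _ _ (cos_int xi R0 Hxi)). match goal with |- ?a = ?b => change (@eq R a b) end. ring.
    apply exRc; intros; apply qf_cont.
    apply ex_RInt_scalR, exRc; intros; apply qf_cont.
    exists (2 * sin (R0 * xi) / xi). apply cos_int; auto.
Qed.


Definition Yf R0 u := exp u * Xf R0 u + 2 * exp u / u * cos (R0 * u) / R0.
Definition Yd R0 u := 2 * exp u * (1 / u - 1 / u ^ 2) * cos (R0 * u) / R0.

Lemma Y_deriv R0 u : u <> 0 -> R0 <> 0 -> is_derive (Yf R0) u (Yd R0 u).
Proof.
  intros Hu HR. assert (HX := Xf_deriv R0 u Hu). unfold Yf, Yd.
  auto_derive.
  - split; [exists (- Xf R0 u + 2 * sin (R0 * u) / u); exact HX|]. sd.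
  - replace (Derive (fun x : R => Xf R0 x) u) with (- Xf R0 u + 2 * sin (R0 * u) / u) by (symmetry; apply is_derive_unique; exact HX). field. sd.
Qed.

Lemma Yd_bound R0 c : 0 < R0 -> c <> 0 ->
  Rabs (Yd R0 c) <= 2 * exp c * (1 / Rabs c + 1 / (Rabs c) ^ 2) / R0.
Proof.
  intros HR Hc. unfold Yd.
  assert (Ac : 0 < Rabs c) by (apply Rabs_pos_lt; auto).
  assert (E := exp_pos c).
  unfold Rdiv. rewrite !Rabs_mult. rewrite (Rabs_right 2) by lra. rewrite (Rabs_right (exp c)) by lra.
  rewrite (Rabs_right (/ R0)) by (apply Rle_ge; left; apply Rinv_0_lt_compat; auto).
  apply Rmult_le_compat_r. left; apply Rinv_0_lt_compat; auto.
  rewrite <- (Rmult_1_r (2 * exp c * (1 * / Rabs c + 1 * / Rabs c ^ 2))).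
  apply Rmult_le_compat; try apply Rabs_pos. apply Rmult_le_pos; try apply Rabs_pos; lra.
  2: apply abs_cos_le.
  apply Rmult_le_compat_l; [lra|].
  eapply Rle_trans; [apply Rabs_triang|]. rewrite Rabs_Ropp, !Rabs_mult, Rabs_R1, !Rmult_1_l.
  rewrite Rabs_Rinv by auto. rewrite Rabs_Rinv by (apply pow_nonzero; auto).
  rewrite <- RPow_abs. lra.
Qed.

Lemma X_diff_bound xi1 xi2 : (0 < xi1 < xi2 \/ xi1 < xi2 < 0) ->
  exists C, forall R0, 0 < R0 ->
    Rabs (exp xi2 * Xf R0 xi2 - exp xi1 * Xf R0 xi1) <= C / R0.
Proof.
  intros Hs.
  assert (Hnz : forall x, xi1 <= x <= xi2 -> x <> 0) by (intros x Hx; destruct Hs; sd).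
  set (m := Rmin (Rabs xi1) (Rabs xi2)).
  assert (Hm : 0 < m).
  { unfold m. apply Rmin_glb_lt; apply Rabs_pos_lt; apply Hnz; lra. }
  assert (Hmc : forall x, xi1 <= x <= xi2 -> m <= Rabs x).
  { intros x Hx. unfold m. destruct Hs.
    - eapply Rle_trans; [apply Rmin_l|]. rewrite !Rabs_right by lra. lra.
    - eapply Rle_trans; [apply Rmin_r|]. rewrite !Rabs_left by lra. lra. }
  set (G := 2 * exp xi2 * (1 / m + 1 / m ^ 2)).
  exists (G * (xi2 - xi1) + 2 * exp xi1 / Rabs xi1 + 2 * exp xi2 / Rabs xi2).
  intros R0 HR.
  destruct (MVT_gen (Yf R0) xi1 xi2 (Yd R0)) as [c [Hc HY]].
  - intros x Hx. rewrite Rmin_left in Hx by lra. rewrite Rmax_right in Hx by lra.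
    apply Y_deriv; [apply Hnz; lra|lra].
  - intros x Hx. rewrite Rmin_left in Hx by lra. rewrite Rmax_right in Hx by lra.
    apply derivable_continuous_pt. exists (Yd R0 x). apply is_derive_Reals.
    apply Y_deriv; [apply Hnz; lra|lra].
  - rewrite Rmin_left in Hc by lra. rewrite Rmax_right in Hc by lra.
    assert (Hc0 := Hnz c Hc). assert (Hmc' := Hmc c Hc).
    assert (Yb : Rabs (Yd R0 c) <= G / R0).
    { eapply Rle_trans; [apply Yd_bound; auto|]. unfold G, Rdiv.
      apply Rmult_le_compat_r; [left; apply Rinv_0_lt_compat; auto|].
      apply Rmult_le_compat. generalize (exp_pos c); lra.
      apply Rplus_le_le_0_compat; apply Rmult_le_pos; try lra. left; apply Rinv_0_lt_compat; apply Rabs_pos_lt; auto.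
      left; apply Rinv_0_lt_compat; apply pow_lt; apply Rabs_pos_lt; auto.
      apply Rmult_le_compat_l; [lra|]. destruct (Req_dec c xi2) as [->|]; [lra|]. left; apply exp_increasing; lra.
      apply Rplus_le_compat; rewrite !Rmult_1_l.
      apply Rinv_le_contravar; auto.
      apply Rinv_le_contravar. apply pow_lt; auto. apply pow_incr; lra. }
    assert (Eq : forall x, x <> 0 -> exp x * Xf R0 x = Yf R0 x - 2 * exp x / x * cos (R0 * x) / R0).
    { intros x Hx. unfold Yf. field. lra. }
    rewrite (Eq xi2), (Eq xi1) by (apply Hnz; lra).
    assert (Tb : forall x, x <> 0 -> Rabs (2 * exp x / x * cos (R0 * x) / R0) <= 2 * exp x / Rabs x / R0).
    { intros x Hx. assert (E := exp_pos x). assert (Ax : 0 < Rabs x) by (apply Rabs_pos_lt; auto).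
      unfold Rdiv. rewrite !Rabs_mult, Rabs_Rinv, (Rabs_Rinv R0) by lra.
      rewrite (Rabs_right 2), (Rabs_right (exp x)), (Rabs_right R0) by lra.
      rewrite <- (Rmult_1_r (2 * exp x * / Rabs x)) at 2.
      apply Rmult_le_compat_r; [left; apply Rinv_0_lt_compat; auto|].
      apply Rmult_le_compat_l. apply Rmult_le_pos; [lra|left; apply Rinv_0_lt_compat; auto].
      apply abs_cos_le. }
    assert (T1 := Tb xi1 (Hnz xi1 ltac:(lra))). assert (T2 := Tb xi2 (Hnz xi2 ltac:(lra))).
    replace (Yf R0 xi2 - 2 * exp xi2 / xi2 * cos (R0 * xi2) / R0 -
       (Yf R0 xi1 - 2 * exp xi1 / xi1 * cos (R0 * xi1) / R0)) with
      ((Yf R0 xi2 - Yf R0 xi1) - 2 * exp xi2 / xi2 * cos (R0 * xi2) / R0 +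
        2 * exp xi1 / xi1 * cos (R0 * xi1) / R0) by ring.
    rewrite HY.
    eapply Rle_trans; [apply Rabs_triang|].
    eapply Rle_trans; [apply Rplus_le_compat_r; apply Rabs_triang|]. rewrite Rabs_Ropp.
    rewrite Rabs_mult, (Rabs_right (xi2 - xi1)) by lra.
    assert (Rabs (Yd R0 c) * (xi2 - xi1) <= G / R0 * (xi2 - xi1)) by (apply Rmult_le_compat_r; lra).
    assert (0 < Rabs xi1) by (apply Rabs_pos_lt; apply Hnz; lra). assert (0 < Rabs xi2) by (apply Rabs_pos_lt; apply Hnz; lra).
    replace ((G * (xi2 - xi1) + 2 * exp xi1 / Rabs xi1 + 2 * exp xi2 / Rabs xi2) / R0) with
      (G / R0 * (xi2 - xi1) + 2 * exp xi2 / Rabs xi2 / R0 + 2 * exp xi1 / Rabs xi1 / R0) by (field; sd).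
    lra.
Qed.


Lemma sym_approx xi : xi <> 0 -> forall e, 0 < e -> exists M, 0 < M /\
  forall R0, M <= R0 -> Rabs (Xf R0 xi - Qv xi) < e.
Proof.
  intros Hxi e He. destruct (improper_elim _ _ (Qv_spec xi Hxi) e He) as [M [HM HH]].
  exists M; split; auto. intros R0 HR. destruct (HH (- R0) R0) as [_ A]; try lra. exact A.
Qed.

Lemma abs_small_zero D : (forall e, 0 < e -> Rabs D <= e) -> D = 0.
Proof.
  intros H. destruct (Req_dec D 0); auto. exfalso.
  assert (A := H (Rabs D / 2) ltac:(apply Rabs_pos_lt in H0; lra)).
  apply Rabs_pos_lt in H0. lra.
Qed.

Lemma Q_const xi1 xi2 : (0 < xi1 < xi2 \/ xi1 < xi2 < 0) ->
  exp xi2 * Qv xi2 = exp xi1 * Qv xi1.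
Proof.
  intros Hs. apply Rminus_diag_uniq. apply abs_small_zero. intros eps Heps.
  destruct (X_diff_bound xi1 xi2 Hs) as [C HC].
  assert (H1 : xi1 <> 0) by (destruct Hs; sd). assert (H2 : xi2 <> 0) by (destruct Hs; sd).
  assert (E1 := exp_pos xi1). assert (E2 := exp_pos xi2).
  set (e := eps / (3 * (exp xi1 + exp xi2))).
  assert (He : 0 < e) by (unfold e; apply Rdiv_lt_0_compat; lra).
  destruct (sym_approx xi1 H1 e He) as [M1 [HM1 A1]].
  destruct (sym_approx xi2 H2 e He) as [M2 [HM2 A2]].
  set (R0 := Rmax (Rmax M1 M2) (3 * Rabs C / eps + 1)).
  assert (HR1 : M1 <= R0) by (unfold R0; eapply Rle_trans; [apply Rmax_l|apply Rmax_l]).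
  assert (HR2 : M2 <= R0) by (unfold R0; eapply Rle_trans; [apply Rmax_r|apply Rmax_l]).
  assert (HR3 : 3 * Rabs C / eps + 1 <= R0) by (unfold R0; apply Rmax_r).
  assert (HC0 : 0 <= 3 * Rabs C / eps) by (apply Rdiv_le_0_compat; [generalize (Rabs_pos C); lra|lra]).
  assert (HR : 0 < R0) by lra.
  specialize (HC R0 HR). specialize (A1 R0 HR1). specialize (A2 R0 HR2).
  assert (HCb : C / R0 <= eps / 3).
  { apply Rle_trans with (Rabs C / R0). unfold Rdiv; apply Rmult_le_compat_r; [left; apply Rinv_0_lt_compat; lra| apply Rle_abs].
    apply Rmult_le_reg_r with R0; auto. unfold Rdiv. rewrite Rmult_assoc, Rinv_l by lra.
    apply Rmult_le_reg_r with (3 / eps). apply Rdiv_lt_0_compat; lra.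
    replace (Rabs C * 1 * (3 / eps)) with (3 * Rabs C / eps) by (field; lra).
    replace (eps * / 3 * R0 * (3 / eps)) with R0 by (field; lra). lra. }
  replace (exp xi2 * Qv xi2 - exp xi1 * Qv xi1) with
    (exp xi2 * (Qv xi2 - Xf R0 xi2) - exp xi1 * (Qv xi1 - Xf R0 xi1) +
     (exp xi2 * Xf R0 xi2 - exp xi1 * Xf R0 xi1)) by ring.
  eapply Rle_trans; [apply Rabs_triang|].
  eapply Rle_trans; [apply Rplus_le_compat_r; apply Rabs_triang|]. rewrite Rabs_Ropp, !Rabs_mult.
  rewrite (Rabs_right (exp xi1)), (Rabs_right (exp xi2)) by lra.
  rewrite <- Rabs_Ropp in A1, A2.
  replace (- (Xf R0 xi1 - Qv xi1)) with (Qv xi1 - Xf R0 xi1) in A1 by ring.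
  replace (- (Xf R0 xi2 - Qv xi2)) with (Qv xi2 - Xf R0 xi2) in A2 by ring.
  assert (exp xi2 * Rabs (Qv xi2 - Xf R0 xi2) <= exp xi2 * e) by (apply Rmult_le_compat_l; lra).
  assert (exp xi1 * Rabs (Qv xi1 - Xf R0 xi1) <= exp xi1 * e) by (apply Rmult_le_compat_l; lra).
  assert (exp xi2 * e + exp xi1 * e = eps / 3) by (unfold e; field; lra).
  lra.
Qed.

Lemma Qv_bound1 xi : 1 <= Rabs xi -> Rabs (Qv xi) <= 9.
Proof.
  intros H. assert (Hxi : xi <> 0) by (intro; subst; rewrite Rabs_R0 in H; lra).
  eapply Rle_trans; [apply Qv_bound; auto|].
  assert (1 / Rabs xi <= 1). { apply Rmult_le_reg_r with (Rabs xi); [lra|]. unfold Rdiv. rewrite Rmult_assoc, Rinv_l; lra. }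
  assert (0 <= 1 / Rabs xi) by (apply Rdiv_le_0_compat; lra).
  generalize PI_4 PI2_3_2; intros. nra.
Qed.

Lemma Qv_neg xi : xi < 0 -> Qv xi = 0.
Proof.
  intros Hxi.
  assert (Hz : exp xi * Qv xi = 0).
  { apply abs_small_zero. intros eps Heps.
    set (y := xi - 1 - 9 / eps).
    assert (Hy : 9 / eps > 0) by (apply Rdiv_lt_0_compat; lra).
    rewrite (Q_const y xi) by (right; unfold y; lra).
    assert (B := Qv_bound1 y ltac:(rewrite Rabs_left by (unfold y; lra); unfold y; lra)).
    rewrite Rabs_mult, Rabs_right by (apply Rle_ge; left; apply exp_pos).
    assert (exp (- y) >= 1 + - y) by (apply Rle_ge, exp_ineq1_le).
    assert (Ey : exp y * exp (- y) = 1) by (rewrite <- exp_plus; replace (y + - y) with 0 by ring; apply exp_0).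
    assert (exp y * (1 - y) <= 1).
    { rewrite <- Ey. apply Rmult_le_compat_l. left; apply exp_pos. lra. }
    assert (1 - y >= 9 / eps) by (unfold y; lra).
    assert (exp y <= eps / 9).
    { apply Rmult_le_reg_r with (9 / eps); auto.
      replace (eps / 9 * (9 / eps)) with 1 by (field; lra).
      apply Rle_trans with (exp y * (1 - y)); auto. apply Rmult_le_compat_l; [left; apply exp_pos|lra]. }
    assert (exp y * Rabs (Qv y) <= eps / 9 * 9).
    { apply Rmult_le_compat; auto; try apply Rabs_pos. left; apply exp_pos. }
    lra. }
  apply Rmult_integral in Hz. destruct Hz as [Hz|Hz]; auto. generalize (exp_pos xi); lra.
Qed.

Definition kappa := exp 1 * Qv 1.

Lemma Qv_pos xi : 0 < xi -> Qv xi = kappa * exp (- xi).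
Proof.
  intros Hxi. unfold kappa.
  assert (E : exp xi * Qv xi = exp 1 * Qv 1).
  { destruct (Rtotal_order xi 1) as [H|[H|H]].
    - symmetry. apply Q_const. left; lra.
    - subst; reflexivity.
    - apply Q_const. left; lra. }
  rewrite <- E. rewrite Rmult_assoc, (Rmult_comm (Qv xi)), <- Rmult_assoc, <- exp_plus.
  replace (xi + - xi) with 0 by ring. rewrite exp_0. ring.
Qed.

Lemma improper_lower2 f l c M0 : improper_int f l ->
  (forall M, M0 <= M -> c <= RInt f (- M) M) -> c <= l.
Proof.
  intros H HM. apply Rnot_lt_le. intros Hlt.
  destruct (improper_elim f l H (c - l) ltac:(lra)) as [M1 [HM1 HH]].
  set (M := Rmax M0 M1).
  destruct (HH (- M) M) as [_ A]. unfold M; generalize (Rmax_r M0 M1); lra.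
  unfold M; generalize (Rmax_r M0 M1); lra.
  assert (B := HM M (Rmax_l M0 M1)). apply Rabs_def2 in A. lra.
Qed.

Lemma kappa_pos : 0 < kappa.
Proof.
  set (x0 := / 16).
  assert (Hx0 : 0 < x0) by (unfold x0; lra).
  assert (Hp : improper_int (fun x => 1 * qf x0 x + 1 * qf (- x0) x) (1 * Qv x0 + 1 * Qv (- x0))).
  { apply improper_lin; apply Qv_spec; lra. }
  rewrite (Qv_neg (- x0)) in Hp by lra.
  set (p := fun x => 2 * cos (x * x0) / (1 + x ^ 2)) in *.
  assert (Hp' : improper_int p (1 * Qv x0 + 1 * 0)).
  { apply improper_ext with (2 := Hp). intros x. unfold qf, p.
    replace (x * - x0) with (- (x * x0)) by ring. rewrite cos_neg, sin_neg. field. pose proof (pos1x2 x); lra. }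
  assert (Hpc : forall x, continuous p x).
  { intros x. apply contR. unfold p. pose proof (pos1x2 x). auto_derive. sd. }
  assert (Hpe : forall a b, ex_RInt p a b) by (intros; apply exRc; auto).
  assert (Hpd : forall x, Rabs (p x) <= 2 / (1 + x ^ 2)).
  { intros x. unfold p. apply dom_frac1. rewrite Rabs_mult, Rabs_right by lra.
    generalize (abs_cos_le (x * x0)); lra. }
  assert (Low : 21 / 16 - 1 / 2 <= 1 * Qv x0 + 1 * 0).
  { apply (improper_lower2 p _ _ 8 Hp'). intros M HM.
    rewrite <- (RChasles p (- M) (- 8) M); auto.
    rewrite <- (RChasles p (- 8) 8 M); auto.
    assert (T1 := tail_neg p 2 Hpe Hpd 8 M ltac:(lra)).
    assert (T2 := tail_pos p 2 Hpe Hpd 8 M ltac:(lra)).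
    apply Rabs_le_between in T1. apply Rabs_le_between in T2.
    assert (Cen : 21 / 16 <= RInt p (- 8) 8).
    { apply Rle_trans with (RInt (fun x => 7 / 4 * (1 / (1 + x ^ 2))) (- 8) 8).
      - rewrite RInt_scalR. rewrite (is_RInt_unique _ _ _ _ (atan_int (-8) 8 ltac:(lra))).
        assert (atan 1 < atan 8) by (apply atan_increasing; lra).
        assert (atan (-8) < atan 0) by (apply atan_increasing; lra).
        rewrite atan_1 in *. rewrite atan_0 in *. generalize PI2_3_2. intros. lra.
        exists (atan 8 - atan (-8)). apply atan_int; lra.
      - apply RInt_le; auto. lra. apply ex_RInt_scalR. exists (atan 8 - atan (-8)). apply atan_int; lra.
        intros x Hx. unfold p.
        assert (cos (x * x0) >= 7 / 8).
        { generalize (cos_lb (x * x0)). intros. assert ((x * x0) ^ 2 <= 1 / 4).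
          { unfold x0. assert (x ^ 2 <= 64) by nra. simpl. nra. } lra. }
        pose proof (pos1x2 x).
        unfold Rdiv. rewrite <- Rmult_assoc. apply Rmult_le_compat_r. left; apply Rinv_0_lt_compat; lra. lra. }
    replace (- (8)) with (-8) in T1 by ring. lra. }
  rewrite Qv_pos in Low by lra.
  assert (0 < kappa * exp (- x0)) by lra.
  assert (E := exp_pos (- x0)). nra.
Qed.


Definition h1 (x : R) : Cplx := (x / (1 + x ^ 2), -1 / (1 + x ^ 2)).
Definition h2 (x : R) : Cplx := (x / (1 + x ^ 2), 1 / (1 + x ^ 2)).
Definition h3 (x : R) : Cplx := ((x ^ 2 - 1) / (1 + x ^ 2) ^ 2, - 2 * x / (1 + x ^ 2) ^ 2).

Definition e1 xi x := (x * cos (x * xi) - sin (x * xi)) / (1 + x ^ 2).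
Definition e1B xi x := x * sin (x * xi) / (xi * (1 + x ^ 2)).
Definition e1b xi x := x * cos (x * xi) / (1 + x ^ 2) + (1 - x ^ 2) * sin (x * xi) / (xi * (1 + x ^ 2) ^ 2).
Definition e1g xi x := - sin (x * xi) / (1 + x ^ 2) - (1 - x ^ 2) * sin (x * xi) / (xi * (1 + x ^ 2) ^ 2).

Lemma e1_improper xi : xi <> 0 -> improper_int (e1 xi) 0.
Proof.
  intros Hxi.
  assert (Hg : exists l, improper_int (e1g xi) l).
  { apply (improper_dom _ (1 + 1 / Rabs xi)).
    - intros a b; apply exRc; intros x; apply contR. unfold e1g. pose proof (pos1x2 x). auto_derive. sd.
    - intros x. unfold e1g. unfold Rminus. apply dom_plus.
      apply dom_frac1. rewrite Rabs_Ropp. apply abs_sin_le.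
      rewrite <- Rabs_Ropp, Ropp_involutive.
      apply dom_frac2; auto. rewrite Rmult_comm. apply (abs_prod_le _ _ 1 (1 + x^2)).
      apply abs_sin_le. apply abs_1mx2. }
  destruct Hg as [l Hl].
  assert (H : improper_int (e1 xi) l).
  { apply improper_ext with (fun x => e1b xi x + e1g xi x).
    { intros x. unfold e1, e1b, e1g. field. pose proof (pos1x2 x); sd. }
    apply (improper_deriv (e1B xi) (e1b xi) (e1g xi) l (2 / Rabs xi)); auto.
    - intros x. unfold e1B, e1b. pose proof (pos1x2 x). auto_derive. sd. field. sd.
    - intros x. apply contR. unfold e1b. pose proof (pos1x2 x). auto_derive. sd.
    - intros x. assert (Ax : 0 < Rabs xi) by (apply Rabs_pos_lt; auto).
      unfold e1B. replace (x * sin (x * xi) / (xi * (1 + x ^ 2))) with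
        ((x / (1 + x ^ 2)) * sin (x * xi) * / xi) by (field; pose proof (pos1x2 x); sd).
      rewrite !Rabs_mult, Rabs_Rinv by auto. rewrite abs_frac.
      assert (B := frac_bound2 x). assert (C := abs_sin_le (x * xi)).
      replace (2 / Rabs xi / (1 + Rabs x)) with (2 / (1 + Rabs x) * 1 * / Rabs xi) by (field; generalize (Rabs_pos x); sd).
      apply Rmult_le_compat_r. left; apply Rinv_0_lt_compat; auto.
      apply Rmult_le_compat; auto; try apply Rabs_pos.
      unfold Rdiv; apply Rmult_le_pos; [apply Rabs_pos|left; apply Rinv_0_lt_compat, pos1x2]. }
  replace 0 with l; auto. apply (improper_odd (e1 xi) l); auto.
  intros x. unfold e1. replace (- x * xi) with (- (x * xi)) by ring. rewrite cos_neg, sin_neg.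
  field. pose proof (pos1x2 x). replace ((- x) ^ 2) with (x ^ 2) by ring. lra.
Qed.

Lemma FT_h1 xi : xi <> 0 -> has_FT h1 xi (0, - Qv xi).
Proof.
  intros Hxi. unfold has_FT, cimproper_int, Cmul, Cexpi, h1; simpl. split.
  - apply improper_ext with (2 := e1_improper xi Hxi). intros x. unfold e1.
    rewrite cos_neg, sin_neg. field. pose proof (pos1x2 x); lra.
  - replace (- Qv xi) with (-1 * Qv xi + 0 * Qv xi) by ring.
    apply improper_ext with (2 := improper_lin _ _ _ _ (-1) 0 (Qv_spec xi Hxi) (Qv_spec xi Hxi)).
    intros x. unfold qf. rewrite cos_neg, sin_neg. field. pose proof (pos1x2 x); lra.
Qed.

Lemma FT_h2 xi : xi <> 0 -> has_FT h2 xi (0, Qv (- xi)).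
Proof.
  intros Hxi. unfold has_FT, cimproper_int, Cmul, Cexpi, h2; simpl. split.
  - apply improper_ext with (2 := e1_improper (- xi) ltac:(lra)). intros x. unfold e1.
    replace (x * - xi) with (- (x * xi)) by ring.
    rewrite cos_neg, sin_neg. field. pose proof (pos1x2 x); lra.
  - apply improper_ext with (2 := Qv_spec (- xi) ltac:(lra)).
    intros x. unfold qf. replace (x * - xi) with (- (x * xi)) by ring.
    rewrite cos_neg, sin_neg. field. pose proof (pos1x2 x); lra.
Qed.

Definition e3 xi x := ((x ^ 2 - 1) * cos (x * xi) - 2 * x * sin (x * xi)) / (1 + x ^ 2) ^ 2.
Definition e3B xi x := (sin (x * xi) - x * cos (x * xi)) / (1 + x ^ 2).
Definition e3b xi x := e3 xi x + xi * qf xi x.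
Definition o3 xi x := - (2 * x * cos (x * xi) + (x ^ 2 - 1) * sin (x * xi)) / (1 * (1 + x ^ 2) ^ 2).

Lemma FT_h3 xi : xi <> 0 -> has_FT h3 xi (- xi * Qv xi, 0).
Proof.
  intros Hxi. unfold has_FT, cimproper_int, Cmul, Cexpi, h3; simpl. split.
  - apply improper_ext with (fun x => e3b xi x + (- xi * qf xi x + 0 * qf xi x)).
    { intros x. unfold e3b, e3. rewrite cos_neg, sin_neg. field. pose proof (pos1x2 x); sd. }
    apply (improper_deriv (e3B xi) (e3b xi) _ _ 2).
    + intros x. unfold e3B, e3b, e3, qf. pose proof (pos1x2 x). auto_derive. sd. field. sd.
    + intros x. apply contR. unfold e3b, e3, qf. pose proof (pos1x2 x). auto_derive. sd.
    + intros x. unfold e3B. rewrite abs_frac.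
      assert (Rabs (sin (x * xi) - x * cos (x * xi)) <= 1 + Rabs x).
      { eapply Rle_trans; [apply Rabs_triang|]. rewrite Rabs_Ropp, Rabs_mult.
        generalize (abs_sin_le (x * xi)) (abs_cos_le (x * xi)) (Rabs_pos x). intros. nra. }
      pose proof (pos1x2 x). assert (Rabs x ^ 2 = x ^ 2) by (rewrite RPow_abs; apply Rabs_right; apply Rle_ge; apply pow2_ge_0).
      generalize (Rabs_pos x). intros.
      apply Rle_trans with ((1 + Rabs x) / (1 + x ^ 2)).
      unfold Rdiv; apply Rmult_le_compat_r; [left; apply Rinv_0_lt_compat; lra|lra].
      apply Rmult_le_reg_r with ((1 + x^2) * (1 + Rabs x)). nra.
      replace ((1 + Rabs x) / (1 + x ^ 2) * ((1 + x ^ 2) * (1 + Rabs x))) with ((1 + Rabs x) * (1 + Rabs x)) by (field; lra).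
      replace (2 / (1 + Rabs x) * ((1 + x ^ 2) * (1 + Rabs x))) with (2 * (1 + x ^ 2)) by (field; lra).
      assert (0 <= (Rabs x - 1) ^ 2) by apply pow2_ge_0. simpl in *. nra.
    + replace (- xi * Qv xi) with (- xi * Qv xi + 0 * Qv xi) by ring.
      apply improper_lin; apply Qv_spec; auto.
  - assert (Ho : exists l, improper_int (o3 xi) l).
    { apply (improper_dom _ (2 / Rabs 1)).
      - intros a b; apply exRc; intros x; apply contR. unfold o3. pose proof (pos1x2 x). auto_derive. sd.
      - intros x. unfold o3. unfold Rdiv. rewrite <- Ropp_mult_distr_l. rewrite Rabs_Ropp.
        apply dom_frac2. lra.
        eapply Rle_trans; [apply Rabs_triang|]. rewrite !Rabs_mult.
        generalize (abs_sin_le (x * xi)) (abs_cos_le (x * xi)) (Rabs_pos x) (abs_1mx2 x). intros.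
        rewrite (Rabs_right 2) by lra.
        replace (Rabs (x ^ 2 - 1)) with (Rabs (1 - x ^ 2)) by (rewrite <- Rabs_Ropp; f_equal; ring).
        assert (Rabs x ^ 2 = x ^ 2) by (rewrite RPow_abs; apply Rabs_right; apply Rle_ge; apply pow2_ge_0).
        assert (0 <= (Rabs x - 1) ^ 2) by apply pow2_ge_0.
        assert (Rabs x * Rabs (cos (x * xi)) <= Rabs x * 1) by (apply Rmult_le_compat_l; auto).
        assert (Rabs (1 - x^2) * Rabs (sin (x * xi)) <= Rabs (1 - x^2) * 1) by (apply Rmult_le_compat_l; auto; apply Rabs_pos).
        assert (2 * Rabs x <= 1 + x ^ 2) by (simpl in *; nra).
        lra. }
    destruct Ho as [l Hl].
    assert (l = 0).
    { apply (improper_odd (o3 xi)); auto. intros x. unfold o3.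
      replace (- x * xi) with (- (x * xi)) by ring. rewrite cos_neg, sin_neg.
      field. pose proof (pos1x2 x). replace ((- x) ^ 2) with (x ^ 2) by ring. sd. }
    subst l. apply improper_ext with (2 := Hl). intros x. unfold o3.
    rewrite cos_neg, sin_neg. field. pose proof (pos1x2 x); sd.
Qed.


Lemma pair_eq (a b c d : R) : a = c -> b = d -> (a, b) = (c, d).
Proof. intros; subst; auto. Qed.

Lemma Cexpi_mul a b w : Cmul (Cexpi a) (Cmul (Cexpi b) w) = Cmul (Cexpi (a + b)) w.
Proof.
  destruct w as [u v]. unfold Cmul, Cexpi; simpl. rewrite cos_plus, sin_plus.
  apply pair_eq; ring.
Qed.

Lemma has_FT_ext f g xi z : (forall x, f x = g x) -> has_FT f xi z -> has_FT g xi z.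
Proof.
  intros H [H1 H2]. split.
  - apply improper_ext with (2 := H1). intros x. rewrite H. auto.
  - apply improper_ext with (2 := H2). intros x. rewrite H. auto.
Qed.

Lemma has_FT_val f xi z z' : z = z' -> has_FT f xi z -> has_FT f xi z'.
Proof. intros ->; auto. Qed.

Lemma has_FT_lin f g xi z1 z2 a b : has_FT f xi z1 -> has_FT g xi z2 ->
  has_FT (fun x => Cadd (Cmul a (f x)) (Cmul b (g x))) xi (Cadd (Cmul a z1) (Cmul b z2)).
Proof.
  intros [F1 F2] [G1 G2].
  destruct a as [a1 a2]; destruct b as [b1 b2]; destruct z1 as [u1 v1]; destruct z2 as [u2 v2].
  simpl in *. split.
  - assert (L1 := improper_lin _ _ _ _ a1 (- a2) F1 F2).
    assert (L2 := improper_lin _ _ _ _ b1 (- b2) G1 G2).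
    assert (L := improper_lin _ _ _ _ 1 1 L1 L2).
    eapply improper_ext; [|eapply improper_val; [|exact L]].
    + intros x. cbv beta. destruct (f x), (g x). unfold Cmul, Cadd, Cexpi; simpl. ring.
    + unfold Cmul, Cadd; simpl. ring.
  - assert (L1 := improper_lin _ _ _ _ a1 a2 F2 F1).
    assert (L2 := improper_lin _ _ _ _ b1 b2 G2 G1).
    assert (L := improper_lin _ _ _ _ 1 1 L1 L2).
    eapply improper_ext; [|eapply improper_val; [|exact L]].
    + intros x. cbv beta. destruct (f x), (g x). unfold Cmul, Cadd, Cexpi; simpl. ring.
    + unfold Cmul, Cadd; simpl. ring.
Qed.

Lemma has_FT_scal f xi z a : has_FT f xi z -> has_FT (fun x => Cmul a (f x)) xi (Cmul a z).
Proof.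
  intros H. assert (L := has_FT_lin f f xi z z a (0, 0) H H).
  eapply has_FT_ext; [|eapply has_FT_val; [|exact L]].
  - intros x. cbv beta. destruct (f x), a. unfold Cmul, Cadd; simpl. apply pair_eq; ring.
  - destruct z, a. unfold Cmul, Cadd; simpl. apply pair_eq; ring.
Qed.

Lemma has_FT_shift f xi z p : has_FT f xi z ->
  has_FT (fun x => f (x - p)) xi (Cmul (Cexpi (- (p * xi))) z).
Proof.
  intros H. destruct (has_FT_scal f xi z (Cexpi (- (p * xi))) H) as [H1 H2].
  split.
  - apply improper_ext with (2 := improper_shift _ _ p H1). intros x. cbv beta.
    rewrite Cexpi_mul. f_equal. f_equal. f_equal. ring.
  - apply improper_ext with (2 := improper_shift _ _ p H2). intros x. cbv beta.
    rewrite Cexpi_mul. f_equal. f_equal. f_equal. ring.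
Qed.


Lemma contMul (f g : R -> R) x : continuous f x -> continuous g x -> continuous (fun y => f y * g y) x.
Proof. intros A B. exact (@continuous_mult R_UniformSpace R_AbsRing f g x A B). Qed.

Lemma ex_RInt_if (g : R -> R) a b : (forall x, continuous g x) ->
  ex_RInt (fun x => if Rlt_dec 0 x then g x else 0) a b.
Proof.
  intros Hg.
  assert (K : forall a b, a <= b -> ex_RInt (fun x => if Rlt_dec 0 x then g x else 0) a b).
  { clear a b. intros a b Hab.
    assert (Z : forall a b, a <= b -> b <= 0 -> ex_RInt (fun x => if Rlt_dec 0 x then g x else 0) a b).
    { intros a' b' H1 H2. apply ex_RInt_ext with (fun _ => 0).
      intros x Hx. rewrite Rmin_left in Hx by lra. rewrite Rmax_right in Hx by lra.
      destruct (Rlt_dec 0 x); auto; lra. apply (@ex_RInt_const R_NormedModule). }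
    assert (P : forall a b, 0 <= a -> a <= b -> ex_RInt (fun x => if Rlt_dec 0 x then g x else 0) a b).
    { intros a' b' H1 H2. apply ex_RInt_ext with g.
      intros x Hx. rewrite Rmin_left in Hx by lra. rewrite Rmax_right in Hx by lra.
      destruct (Rlt_dec 0 x); auto; lra. apply exRc; auto. }
    destruct (Rle_dec b 0). apply Z; auto.
    destruct (Rle_dec 0 a). apply P; auto.
    apply (@ex_RInt_Chasles R_NormedModule _ a 0 b); [apply Z|apply P]; lra. }
  destruct (Rle_dec a b). apply K; auto. apply ex_RInt_swap, K; lra.
Qed.

Lemma ln_le_lin y : 0 < y -> ln y <= y - 1.
Proof. intros Hy. generalize (exp_ineq1_le (ln y)). rewrite exp_ln by auto. lra. Qed.

Lemma rp_bound s : exists C, 0 < C /\ forall xi, 0 <= xi ->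
  Rpower (1 + xi ^ 2) s * exp (- xi) ^ 2 * (1 + xi ^ 2) ^ 2 <= C.
Proof.
  set (sg := Rabs s + 2).
  assert (Hsg : 2 <= sg) by (unfold sg; generalize (Rabs_pos s); lra).
  exists (exp (2 - 2 * sg + 2 * sg * ln sg)). split. apply exp_pos.
  intros xi Hxi.
  assert (A := pos1x2 xi).
  assert (E : Rpower (1 + xi ^ 2) s * exp (- xi) ^ 2 * (1 + xi ^ 2) ^ 2 =
     exp ((s + 2) * ln (1 + xi ^ 2) - 2 * xi)).
  { unfold Rpower.
    assert (P1 : exp (- xi) ^ 2 = exp (- 2 * xi)) by (simpl; rewrite Rmult_1_r, <- exp_plus; f_equal; ring).
    assert (P2 : (1 + xi ^ 2) ^ 2 = exp (2 * ln (1 + xi ^ 2))).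
    { replace (2 * ln (1 + xi ^ 2)) with (ln (1 + xi^2) + ln (1 + xi^2)) by ring.
      rewrite exp_plus, exp_ln by lra. ring. }
    rewrite P1, P2, <- !exp_plus. f_equal. ring. }
  rewrite E. destruct (Req_dec ((s + 2) * ln (1 + xi ^ 2) - 2 * xi) (2 - 2 * sg + 2 * sg * ln sg)) as [->|Hne]; [lra|].
  left. apply exp_increasing.
  assert (L0 : 0 <= ln (1 + xi ^ 2)).
  { rewrite <- ln_1. apply ln_le; [lra|generalize (pow2_ge_0 xi); lra]. }
  assert (L1 : ln (1 + xi ^ 2) <= 2 * ln (1 + xi)).
  { replace (2 * ln (1 + xi)) with (ln ((1 + xi) ^ 2)) by (rewrite ln_pow by lra; simpl; ring).
    apply ln_le; [lra|]. nra. }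
  assert (L2 : ln (/ sg * (1 + xi)) <= / sg * (1 + xi) - 1).
  { apply ln_le_lin. apply Rmult_lt_0_compat; [apply Rinv_0_lt_compat|]; lra. }
  rewrite ln_mult, ln_Rinv in L2 by (try apply Rinv_0_lt_compat; lra).
  assert (L3 : (s + 2) * ln (1 + xi ^ 2) <= sg * ln (1 + xi ^ 2)).
  { apply Rmult_le_compat_r; auto. unfold sg. generalize (Rle_abs s); lra. }
  assert (L4 : sg * ln (1 + xi) <= sg * (/ sg * (1 + xi) - 1 + ln sg)).
  { apply Rmult_le_compat_l; lra. }
  replace (sg * (/ sg * (1 + xi) - 1 + ln sg)) with (1 + xi - sg + sg * ln sg) in L4 by (field; lra).
  assert (sg * ln (1 + xi ^ 2) <= 2 * (sg * ln (1 + xi))) by nra.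
  lra.
Qed.

Definition Fint (s : R) (q : R -> R) (xi : R) :=
  if Rlt_dec 0 xi then Rpower (1 + xi ^ 2) s * exp (- xi) ^ 2 * q xi else 0.

Lemma Fint_exists s q Q0 : (forall xi, continuous q xi) ->
  (forall xi, Rabs (q xi) <= Q0 * (1 + xi ^ 2)) -> exists I, improper_int (Fint s q) I.
Proof.
  intros Hc Hq. destruct (rp_bound s) as [C [HC HCb]].
  assert (HQ : 0 <= Q0) by (generalize (Hq 0) (Rabs_pos (q 0)); simpl; intros; nra).
  apply (improper_dom _ (C * Q0)).
  - intros a b. apply ex_RInt_if. intros x. apply contMul; auto.
    apply contR. unfold Rpower. pose proof (pos1x2 x). auto_derive. sd.
  - intros xi. unfold Fint. destruct (Rlt_dec 0 xi).
    + pose proof (pos1x2 xi).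
      assert (P : 0 < Rpower (1 + xi ^ 2) s * exp (- xi) ^ 2).
      { apply Rmult_lt_0_compat. unfold Rpower; apply exp_pos. apply pow_lt, exp_pos. }
      rewrite Rabs_mult, (Rabs_right (_ * _)) by lra.
      apply Rle_trans with (Rpower (1 + xi ^ 2) s * exp (- xi) ^ 2 * (Q0 * (1 + xi ^ 2))).
      apply Rmult_le_compat_l; [lra|auto].
      specialize (HCb xi ltac:(lra)).
      apply Rmult_le_reg_r with (1 + xi ^ 2); auto.
      replace (C * Q0 / (1 + xi ^ 2) * (1 + xi ^ 2)) with (C * Q0) by (field; lra).
      replace (Rpower (1 + xi ^ 2) s * exp (- xi) ^ 2 * (Q0 * (1 + xi ^ 2)) * (1 + xi ^ 2)) with
        (Rpower (1 + xi ^ 2) s * exp (- xi) ^ 2 * (1 + xi ^ 2) ^ 2 * Q0) by ring.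
      apply Rmult_le_compat_r; auto.
    + rewrite Rabs_R0. apply Rdiv_le_0_compat. nra. apply pos1x2.
Qed.

Lemma Fint_nonneg s q xi : (forall y, 0 <= q y) -> 0 <= Fint s q xi.
Proof.
  intros H. unfold Fint. destruct (Rlt_dec 0 xi); [|lra].
  apply Rmult_le_pos; auto. apply Rmult_le_pos. unfold Rpower; left; apply exp_pos.
  apply pow2_ge_0.
Qed.


Definition wave a w c t x : Cplx := Cmul (Cscale a (Cexpi (- (w * t)))) (h1 (x - c * t)).
Definition Aw a w c t xi : Cplx := Cmul (Cscale a (Cexpi (- (w * t)))) (Cexpi (- (c * t * xi))).
Definition Hc xi : Cplx := if Rlt_dec 0 xi then (0, - (kappa * exp (- xi))) else (0, 0).

Lemma Hc_eq xi : xi <> 0 -> (0, - Qv xi) = Hc xi.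
Proof.
  intros H. unfold Hc. destruct (Rlt_dec 0 xi).
  - rewrite Qv_pos; auto.
  - rewrite Qv_neg by lra. apply pair_eq; ring.
Qed.

Lemma FT_wave a w c t xi : xi <> 0 ->
  has_FT (wave a w c t) xi (Cmul (Aw a w c t xi) (Hc xi)).
Proof.
  intros H. assert (F := has_FT_scal _ _ _ (Cscale a (Cexpi (- (w * t))))
     (has_FT_shift _ _ _ (c * t) (FT_h1 xi H))).
  rewrite Hc_eq in F by auto.
  eapply has_FT_val; [|exact F].
  unfold Aw. destruct (Hc xi) as [u v]. unfold Cmul, Cscale, Cexpi; simpl. apply pair_eq; ring.
Qed.

Lemma FT_wave_diff a1 w1 c1 t1 a2 w2 c2 t2 xi : xi <> 0 ->
  has_FT (fun x => Csub (wave a1 w1 c1 t1 x) (wave a2 w2 c2 t2 x)) xi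
    (Cmul (Csub (Aw a1 w1 c1 t1 xi) (Aw a2 w2 c2 t2 xi)) (Hc xi)).
Proof.
  intros H.
  assert (L := has_FT_lin _ _ _ _ _ (1, 0) (-1, 0) (FT_wave a1 w1 c1 t1 xi H) (FT_wave a2 w2 c2 t2 xi H)).
  eapply has_FT_ext; [|eapply has_FT_val; [|exact L]].
  - intros x. cbv beta. destruct (wave a1 w1 c1 t1 x), (wave a2 w2 c2 t2 x).
    unfold Cmul, Cadd, Csub; simpl. apply pair_eq; ring.
  - destruct (Aw a1 w1 c1 t1 xi), (Aw a2 w2 c2 t2 xi), (Hc xi).
    unfold Cmul, Cadd, Csub; simpl. apply pair_eq; ring.
Qed.

Lemma Cnorm2_mul u v : Cnorm2 (Cmul u v) = Cnorm2 u * Cnorm2 v.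
Proof. destruct u, v. unfold Cnorm2, Cmul; simpl. ring. Qed.

Lemma Aw_eq a w c t xi : Aw a w c t xi = Cscale a (Cexpi (- (w * t) + - (c * t * xi))).
Proof. unfold Aw, Cmul, Cscale, Cexpi; simpl. rewrite cos_plus, sin_plus. apply pair_eq; ring. Qed.

Lemma Cnorm2_diff a b u v :
  Cnorm2 (Csub (Cscale a (Cexpi u)) (Cscale b (Cexpi v))) = a ^ 2 + b ^ 2 - 2 * a * b * cos (u - v).
Proof.
  unfold Cnorm2, Csub, Cscale, Cexpi; simpl. rewrite cos_minus.
  assert (E1 := sin2_cos2 u). assert (E2 := sin2_cos2 v). unfold Rsqr in *.
  transitivity (a * a * (sin u * sin u + cos u * cos u) + b * b * (sin v * sin v + cos v * cos v)
     - 2 * a * b * (cos u * cos v + sin u * sin v)). ring.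
  rewrite E1, E2. ring.
Qed.

Definition phid w1 c1 t1 w2 c2 t2 xi := (- (w1 * t1) + - (c1 * t1 * xi)) - (- (w2 * t2) + - (c2 * t2 * xi)).
Definition qd a1 w1 c1 t1 a2 w2 c2 t2 xi :=
  kappa ^ 2 * (a1 ^ 2 + a2 ^ 2 - 2 * a1 * a2 * cos (phid w1 c1 t1 w2 c2 t2 xi)).

Lemma Hc_norm xi : Cnorm2 (Hc xi) = if Rlt_dec 0 xi then kappa ^ 2 * exp (- xi) ^ 2 else 0.
Proof. unfold Hc, Cnorm2. destruct (Rlt_dec 0 xi); simpl; ring. Qed.

Lemma qd_nonneg a1 w1 c1 t1 a2 w2 c2 t2 xi : 0 <= qd a1 w1 c1 t1 a2 w2 c2 t2 xi.
Proof.
  unfold qd. apply Rmult_le_pos. apply pow2_ge_0.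
  generalize (COS_bound (phid w1 c1 t1 w2 c2 t2 xi)). intros.
  assert (0 <= (a1 - a2) ^ 2) by apply pow2_ge_0. assert (0 <= (a1 + a2) ^ 2) by apply pow2_ge_0.
  destruct (Rle_dec 0 (a1 * a2)); nra.
Qed.

Lemma qd_exists s a1 w1 c1 t1 a2 w2 c2 t2 :
  exists I, improper_int (Fint s (qd a1 w1 c1 t1 a2 w2 c2 t2)) I.
Proof.
  apply (Fint_exists s _ (kappa ^ 2 * (a1 ^ 2 + a2 ^ 2 + 2 * Rabs (a1 * a2)))).
  - intros xi. apply contR. unfold qd, phid. auto_derive. auto.
  - intros xi. unfold qd. rewrite Rabs_mult, (Rabs_right (kappa ^ 2)) by (apply Rle_ge, pow2_ge_0).
    apply Rle_trans with (kappa^2 * ((a1^2+a2^2+2*Rabs(a1*a2)) * (1+xi^2))); [|right; ring].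
    apply Rmult_le_compat_l. apply pow2_ge_0.
    pose proof (pos1x2 xi). pose proof (pow2_ge_0 xi).
    assert (Rabs (a1 ^ 2 + a2 ^ 2 - 2 * a1 * a2 * cos (phid w1 c1 t1 w2 c2 t2 xi)) <= a1 ^ 2 + a2 ^ 2 + 2 * Rabs (a1 * a2)).
    { eapply Rle_trans; [apply Rabs_triang|]. rewrite Rabs_Ropp.
      rewrite Rabs_right by (apply Rle_ge; generalize (pow2_ge_0 a1) (pow2_ge_0 a2); lra).
      replace (2 * a1 * a2 * cos (phid w1 c1 t1 w2 c2 t2 xi)) with ((2 * (a1 * a2)) * cos (phid w1 c1 t1 w2 c2 t2 xi)) by ring.
      rewrite Rabs_mult, Rabs_mult, (Rabs_right 2) by lra.
      assert (Rabs (a1 * a2) * Rabs (cos (phid w1 c1 t1 w2 c2 t2 xi)) <= Rabs (a1 * a2) * 1)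
        by (apply Rmult_le_compat_l; [apply Rabs_pos|apply abs_cos_le]).
      lra. }
    assert (0 <= a1 ^ 2 + a2 ^ 2 + 2 * Rabs (a1 * a2)) by (generalize (pow2_ge_0 a1) (pow2_ge_0 a2) (Rabs_pos (a1 * a2)); lra).
    nra.
Qed.

Lemma wave_diff_norm s a1 w1 c1 t1 a2 w2 c2 t2 I :
  improper_int (Fint s (qd a1 w1 c1 t1 a2 w2 c2 t2)) I ->
  Hs_norm_is s (fun x => Csub (wave a1 w1 c1 t1 x) (wave a2 w2 c2 t2 x)) (sqrt (I / (2 * PI))).
Proof.
  intros HI.
  assert (I0 : 0 <= I) by (apply (improper_nonneg _ _ HI); intros; apply Fint_nonneg; intros; apply qd_nonneg).
  assert (HPI : 0 < PI) by apply PI_RGT_0.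
  split. apply sqrt_pos.
  exists (fun xi => Cmul (Csub (Aw a1 w1 c1 t1 xi) (Aw a2 w2 c2 t2 xi)) (Hc xi)). split.
  - intros xi H. apply FT_wave_diff; auto.
  - rewrite <- Rsqr_pow2, Rsqr_sqrt by (apply Rdiv_le_0_compat; lra).
    replace (2 * PI * (I / (2 * PI))) with I by (field; lra).
    apply improper_ext with (2 := HI). intros xi.
    rewrite Cnorm2_mul, Hc_norm, !Aw_eq, Cnorm2_diff. unfold Fint, qd, phid.
    destruct (Rlt_dec 0 xi); ring.
Qed.


Lemma Fint_scale s q k I : improper_int (Fint s q) I -> improper_int (Fint s (fun xi => k * q xi)) (k * I).
Proof.
  intros H. replace (k * I) with (k * I + 0 * I) by ring.
  apply improper_ext with (2 := improper_lin _ _ _ _ k 0 H H).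
  intros xi. unfold Fint. destruct (Rlt_dec 0 xi); ring.
Qed.

Lemma Fint_ext s q q' I : (forall xi, q xi = q' xi) -> improper_int (Fint s q) I -> improper_int (Fint s q') I.
Proof.
  intros E H. apply improper_ext with (2 := H). intros xi. unfold Fint. rewrite E. auto.
Qed.

Definition Jv s := epsilon (inhabits 0) (fun l => improper_int (Fint s (fun _ => 1)) l).

Lemma Jv_spec s : improper_int (Fint s (fun _ => 1)) (Jv s).
Proof.
  unfold Jv. apply epsilon_spec. apply (Fint_exists s _ 1).
  intros; apply (@continuous_const R_UniformSpace R_UniformSpace).
  intros xi. rewrite Rabs_R1. pose proof (pow2_ge_0 xi). lra.
Qed.

Definition mlow s := exp (- (Rabs s * ln 5)) * exp (- 4).

Lemma mlow_pos s : 0 < mlow s.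
Proof. unfold mlow. apply Rmult_lt_0_compat; apply exp_pos. Qed.

Lemma weight_low s x : 1 <= x <= 2 -> mlow s <= Rpower (1 + x ^ 2) s * exp (- x) ^ 2.
Proof.
  intros Hx. unfold mlow, Rpower. apply Rmult_le_compat.
  left; apply exp_pos. left; apply exp_pos.
  - assert (L0 : 0 <= ln (1 + x ^ 2)) by (rewrite <- ln_1; apply ln_le; [lra|nra]).
    assert (L5 : ln (1 + x ^ 2) <= ln 5) by (apply ln_le; [nra|nra]).
    destruct (Req_dec (- (Rabs s * ln 5)) (s * ln (1 + x ^ 2))) as [->|]; [lra|].
    left. apply exp_increasing.
    assert (- (Rabs s * ln 5) <= s * ln (1 + x ^ 2)).
    { destruct (Rle_dec 0 s).
      - rewrite Rabs_right by lra. assert (0 <= ln 5) by (rewrite <- ln_1; apply ln_le; lra). nra.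
      - rewrite Rabs_left by lra. nra. }
    lra.
  - simpl. rewrite Rmult_1_r, <- exp_plus.
    destruct (Req_dec (-4) (- x + - x)) as [->|]; [lra|]. left; apply exp_increasing. lra.
Qed.

Lemma Jv_low s : mlow s <= Jv s.
Proof.
  eapply Rle_trans; [|apply (improper_lower _ _ 1 2 (Jv_spec s))].
  - replace (mlow s) with (RInt (fun _ => mlow s) 1 2).
    2:{ rewrite RInt_const. unfold scal; simpl. unfold mult; simpl. ring. }
    apply RInt_le. lra. apply (@ex_RInt_const R_NormedModule).
    apply ex_RInt_if. intros x. apply contR. unfold Rpower. pose proof (pos1x2 x). auto_derive. sd.
    intros x Hx. unfold Fint. destruct (Rlt_dec 0 x); [|lra]. rewrite Rmult_1_r. apply weight_low; lra.
  - intros. apply Fint_nonneg. intros; lra.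
  - lra.
Qed.

Lemma Jv_pos s : 0 < Jv s.
Proof. generalize (mlow_pos s) (Jv_low s). lra. Qed.

Definition mu s := kappa * sqrt (Jv s / (2 * PI)).

Lemma mu_pos s : 0 < mu s.
Proof.
  unfold mu. apply Rmult_lt_0_compat. apply kappa_pos. apply sqrt_lt_R0.
  apply Rdiv_lt_0_compat. apply Jv_pos. generalize PI_RGT_0; lra.
Qed.

Lemma Hs_norm_ext s f g N : (forall x, f x = g x) -> Hs_norm_is s f N -> Hs_norm_is s g N.
Proof.
  intros E [H0 [F [HF HI]]]. split; auto. exists F. split; auto.
  intros xi Hxi. apply has_FT_ext with f; auto.
Qed.

Lemma sqrt_scale k J : 0 <= J -> sqrt (k ^ 2 * J / (2 * PI)) = Rabs k * sqrt (J / (2 * PI)).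
Proof.
  intros HJ. assert (HPI := PI_RGT_0).
  replace (k ^ 2 * J / (2 * PI)) with (k ^ 2 * (J / (2 * PI))) by (field; lra).
  rewrite sqrt_mult_alt by (apply pow2_ge_0).
  rewrite <- Rsqr_pow2, sqrt_Rsqr_abs. auto.
Qed.

Lemma Hs_norm_val s f N N' : N = N' -> Hs_norm_is s f N -> Hs_norm_is s f N'.
Proof. intros ->; auto. Qed.

Lemma norm_const_phase s a1 w1 c1 t1 a2 w2 c2 t2 :
  (forall xi, phid w1 c1 t1 w2 c2 t2 xi = 0) ->
  Hs_norm_is s (fun x => Csub (wave a1 w1 c1 t1 x) (wave a2 w2 c2 t2 x)) (Rabs (a1 - a2) * mu s).
Proof.
  intros Hp.
  assert (H := Fint_scale s _ ((kappa * (a1 - a2)) ^ 2) _ (Jv_spec s)).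
  assert (H' : improper_int (Fint s (qd a1 w1 c1 t1 a2 w2 c2 t2)) ((kappa * (a1 - a2)) ^ 2 * Jv s)).
  { apply Fint_ext with (2 := H). intros xi. unfold qd. rewrite Hp, cos_0. ring. }
  assert (N := wave_diff_norm _ _ _ _ _ _ _ _ _ _ H').
  rewrite sqrt_scale in N by (left; apply Jv_pos).
  eapply Hs_norm_val; [|exact N]. unfold mu. rewrite Rabs_mult, (Rabs_right kappa).
  ring. left; apply kappa_pos.
Qed.


Lemma wave_norm s a w c t : Hs_norm_is s (wave a w c t) (Rabs a * mu s).
Proof.
  assert (H := norm_const_phase s a w c t 0 w c t ltac:(intros; unfold phid; ring)).
  rewrite Rminus_0_r in H. apply Hs_norm_ext with (2 := H).
  intros x. unfold wave. destruct (h1 (x - c * t)). unfold Csub, Cmul, Cscale, Cexpi; simpl. apply pair_eq; ring.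
Qed.

Lemma wave_norm0 s a1 w1 c1 a2 w2 c2 :
  Hs_norm_is s (fun x => Csub (wave a1 w1 c1 0 x) (wave a2 w2 c2 0 x)) (Rabs (a1 - a2) * mu s).
Proof. apply norm_const_phase. intros; unfold phid; ring. Qed.

Lemma Fint_mono s q q' xi : (forall y, q y <= q' y) -> Fint s q xi <= Fint s q' xi.
Proof.
  intros H. unfold Fint. destruct (Rlt_dec 0 xi); [|lra].
  apply Rmult_le_compat_l; auto. apply Rmult_le_pos. unfold Rpower; left; apply exp_pos. apply pow2_ge_0.
Qed.

Definition J2v s := epsilon (inhabits 0) (fun l => improper_int (Fint s (fun xi => 1 + xi ^ 2)) l).

Lemma J2v_spec s : improper_int (Fint s (fun xi => 1 + xi ^ 2)) (J2v s).
Proof.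
  unfold J2v. apply epsilon_spec. apply (Fint_exists s _ 1).
  intros x; apply contR; auto_derive; auto.
  intros xi. rewrite Rabs_right by (apply Rle_ge; left; apply pos1x2). lra.
Qed.

Lemma wave_cont s a w c t0 : forall e, 0 < e -> exists eta, 0 < eta /\
  forall t, Rabs (t - t0) < eta -> exists N,
    Hs_norm_is s (fun x => Csub (wave a w c t x) (wave a w c t0 x)) N /\ N < e.
Proof.
  intros e He.
  assert (HPI := PI_RGT_0).
  set (K1 := 2 * kappa ^ 2 * a ^ 2 * (w ^ 2 + c ^ 2)).
  assert (HK1 : 0 <= K1) by (unfold K1; generalize (pow2_ge_0 kappa) (pow2_ge_0 a) (pow2_ge_0 w) (pow2_ge_0 c); intros;
     apply Rmult_le_pos; [apply Rmult_le_pos; [apply Rmult_le_pos|]|]; lra).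
  assert (HJ2 : 0 <= J2v s) by (apply (improper_nonneg _ _ (J2v_spec s)); intros; apply Fint_nonneg; intros; generalize (pos1x2 y); lra).
  set (D := sqrt (K1 * J2v s / (2 * PI))).
  assert (HD : 0 <= D) by apply sqrt_pos.
  exists (e / (D + 1)). split. apply Rdiv_lt_0_compat; lra.
  intros t Ht.
  destruct (qd_exists s a w c t a w c t0) as [I HI].
  exists (sqrt (I / (2 * PI))). split. apply wave_diff_norm; auto.
  assert (Hq : forall xi, qd a w c t a w c t0 xi <= (K1 * (t - t0) ^ 2) * (1 + xi ^ 2)).
  { intros xi. unfold qd, K1.
    set (ph := phid w c t w c t0 xi).
    assert (Eph : ph = - ((t - t0) * (w + c * xi))) by (unfold ph, phid; ring).
    assert (C := cos_lb ph).
    assert (B1 : a ^ 2 + a ^ 2 - 2 * a * a * cos ph <= a ^ 2 * ph ^ 2).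
    { assert (0 <= a^2) by apply pow2_ge_0. simpl in *. nra. }
    assert (B2 : ph ^ 2 <= (t - t0) ^ 2 * (2 * (w ^ 2 + c ^ 2) * (1 + xi ^ 2))).
    { rewrite Eph. replace ((- ((t - t0) * (w + c * xi))) ^ 2) with ((t - t0) ^ 2 * (w + c * xi) ^ 2) by ring.
      apply Rmult_le_compat_l. apply pow2_ge_0.
      assert (0 <= (w - c * xi) ^ 2) by apply pow2_ge_0.
      assert (0 <= w ^ 2 * xi ^ 2) by (apply Rmult_le_pos; apply pow2_ge_0).
      assert (0 <= c ^ 2) by apply pow2_ge_0.
      simpl in *. nra. }
    assert (0 <= kappa ^ 2) by apply pow2_ge_0. assert (0 <= a ^ 2) by apply pow2_ge_0.
    apply Rle_trans with (kappa ^ 2 * (a ^ 2 * ph ^ 2)).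
    apply Rmult_le_compat_l; auto.
    apply Rle_trans with (kappa ^ 2 * (a ^ 2 * ((t - t0) ^ 2 * (2 * (w ^ 2 + c ^ 2) * (1 + xi ^ 2))))).
    apply Rmult_le_compat_l; auto. apply Rmult_le_compat_l; auto.
    right; ring. }
  assert (HIb : I <= K1 * (t - t0) ^ 2 * J2v s).
  { apply (improper_ge _ _ _ _ HI (Fint_scale s _ (K1 * (t - t0) ^ 2) _ (J2v_spec s))).
    intros xi. apply Fint_mono. intros; apply Hq. }
  apply Rle_lt_trans with (sqrt ((t - t0) ^ 2 * (K1 * J2v s) / (2 * PI))).
  { apply sqrt_le_1_alt. unfold Rdiv. apply Rmult_le_compat_r. left; apply Rinv_0_lt_compat; lra.
    lra. }
  rewrite sqrt_scale by (apply Rmult_le_pos; auto). fold D.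
  assert (Rabs (t - t0) * D <= e / (D + 1) * D) by (apply Rmult_le_compat_r; lra).
  assert (e / (D + 1) * D < e).
  { apply Rmult_lt_reg_r with (D + 1); [lra|].
    replace (e / (D + 1) * D * (D + 1)) with (e * D) by (field; lra). nra. }
  lra.
Qed.

Lemma wave_far s a1 a2 w1 c1 w2 c2 t : 0 <= a1 <= a2 -> 4 <= (c2 - c1) * t ->
  forall I, improper_int (Fint s (qd a1 w1 c1 t a2 w2 c2 t)) I ->
  a1 * (kappa * sqrt (mlow s / (2 * PI))) <= sqrt (I / (2 * PI)).
Proof.
  intros Ha Hb I HI. assert (HPI := PI_RGT_0).
  set (b := (c2 - c1) * t). set (A0 := (w2 - w1) * t). assert (Hb4 : 4 <= b) by (unfold b; lra).
  set (m := mlow s). assert (Hm : 0 < m) by apply mlow_pos.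
  set (k2 := kappa ^ 2). assert (Hk2 : 0 <= k2) by apply pow2_ge_0.
  assert (Eq : forall xi, qd a1 w1 c1 t a2 w2 c2 t xi = k2 * (a1 ^ 2 + a2 ^ 2 - 2 * a1 * a2 * cos (A0 + b * xi))).
  { intros xi. unfold qd, k2. f_equal. f_equal. f_equal. f_equal. unfold phid, A0, b. ring. }
  set (g := fun xi => m * k2 * (a1 ^ 2 + a2 ^ 2) - m * k2 * (2 * a1 * a2) * cos (A0 + b * xi)).
  set (G := fun xi => m * k2 * (a1 ^ 2 + a2 ^ 2) * xi - m * k2 * (2 * a1 * a2) * (sin (A0 + b * xi) / b)).
  assert (Gi : is_RInt g 1 2 (G 2 - G 1)).
  { apply (is_RInt_derive G g).
    - intros x _. unfold G, g. auto_derive; [sd|field; sd].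
    - intros x _. apply contR. unfold g. auto_derive. auto. }
  assert (Low1 : G 2 - G 1 <= RInt (Fint s (qd a1 w1 c1 t a2 w2 c2 t)) 1 2).
  { rewrite <- (is_RInt_unique _ _ _ _ Gi). apply RInt_le. lra. exists (G 2 - G 1); auto.
    apply ex_RInt_if. intros x. apply contMul. apply contR. unfold Rpower. pose proof (pos1x2 x). auto_derive. sd.
    apply contR. unfold qd, phid. auto_derive. auto.
    intros x Hx. unfold Fint. destruct (Rlt_dec 0 x); [|lra]. rewrite Eq.
    assert (W := weight_low s x ltac:(lra)). fold m in W.
    assert (Q : 0 <= k2 * (a1 ^ 2 + a2 ^ 2 - 2 * a1 * a2 * cos (A0 + b * x))).
    { rewrite <- Eq. apply qd_nonneg. }
    unfold g. replace (m * k2 * (a1 ^ 2 + a2 ^ 2) - m * k2 * (2 * a1 * a2) * cos (A0 + b * x)) with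
      (m * (k2 * (a1 ^ 2 + a2 ^ 2 - 2 * a1 * a2 * cos (A0 + b * x)))) by ring.
    apply Rmult_le_compat_r; auto. }
  assert (Low2 : m * k2 * a1 ^ 2 <= G 2 - G 1).
  { unfold G.
    assert (S : Rabs (sin (A0 + b * 2) / b - sin (A0 + b * 1) / b) <= 2 / b).
    { replace (sin (A0 + b * 2) / b - sin (A0 + b * 1) / b) with ((sin (A0 + b * 2) - sin (A0 + b * 1)) * / b) by (field; lra).
      rewrite Rabs_mult, (Rabs_right (/ b)) by (apply Rle_ge; left; apply Rinv_0_lt_compat; lra).
      unfold Rdiv. apply Rmult_le_compat_r. left; apply Rinv_0_lt_compat; lra.
      eapply Rle_trans; [apply Rabs_triang|]. rewrite Rabs_Ropp. generalize (abs_sin_le (A0 + b * 2)) (abs_sin_le (A0 + b * 1)); lra. }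
    apply Rabs_le_between in S.
    assert (2 / b <= 1 / 2).
    { apply Rmult_le_reg_r with b; [lra|]. replace (2 / b * b) with 2 by (field; lra). lra. }
    assert (Hmk : 0 <= m * k2 * (2 * a1 * a2)) by (apply Rmult_le_pos; [apply Rmult_le_pos|]; lra || nra).
    assert (m * k2 * (2 * a1 * a2) * (sin (A0 + b * 2) / b - sin (A0 + b * 1) / b) <= m * k2 * (2 * a1 * a2) * (1 / 2))
      by (apply Rmult_le_compat_l; lra).
    assert (0 <= m * k2) by (apply Rmult_le_pos; lra).
    assert (a1 * a2 <= a2 ^ 2) by (simpl; nra).
    assert (m * k2 * (a1 * a2) <= m * k2 * a2 ^ 2) by (apply Rmult_le_compat_l; lra).
    replace (m * k2 * (a1 ^ 2 + a2 ^ 2) * 2 - m * k2 * (2 * a1 * a2) * (sin (A0 + b * 2) / b) -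
      (m * k2 * (a1 ^ 2 + a2 ^ 2) * 1 - m * k2 * (2 * a1 * a2) * (sin (A0 + b * 1) / b))) with
      (m * k2 * (a1 ^ 2 + a2 ^ 2) - m * k2 * (2 * a1 * a2) * (sin (A0 + b * 2) / b - sin (A0 + b * 1) / b)) by ring.
    nra. }
  assert (Low3 : RInt (Fint s (qd a1 w1 c1 t a2 w2 c2 t)) 1 2 <= I).
  { apply improper_lower; auto. intros; apply Fint_nonneg; intros; apply qd_nonneg. lra. }
  replace (a1 * (kappa * sqrt (m / (2 * PI)))) with (sqrt ((a1 * kappa) ^ 2 * m / (2 * PI))).
  2:{ rewrite sqrt_scale by lra. rewrite Rabs_right. fold m. ring.
      apply Rle_ge. apply Rmult_le_pos; [lra|left; apply kappa_pos]. }
  apply sqrt_le_1_alt. unfold Rdiv. apply Rmult_le_compat_r. left; apply Rinv_0_lt_compat; lra.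
  replace ((a1 * kappa) ^ 2 * m) with (m * k2 * a1 ^ 2) by (unfold k2; ring). lra.
Qed.


Definition Ew a w t : Cplx := Cscale a (Cexpi (- (w * t))).

Lemma Cnorm2_Ew a w t : Cnorm2 (Ew a w t) = a ^ 2.
Proof.
  unfold Ew, Cnorm2, Cscale, Cexpi; simpl. assert (E := sin2_cos2 (- (w * t))). unfold Rsqr in E.
  transitivity (a * a * (sin (- (w * t)) * sin (- (w * t)) + cos (- (w * t)) * cos (- (w * t)))). ring.
  rewrite E. ring.
Qed.

Lemma Cnorm2_h1 y : Cnorm2 (h1 y) = 1 / (1 + y ^ 2).
Proof. unfold Cnorm2, h1; simpl. field. pose proof (pos1x2 y). simpl in *. lra. Qed.

Lemma Cnorm2_h3 y : Cnorm2 (h3 y) = 1 / (1 + y ^ 2) ^ 2.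
Proof. unfold Cnorm2, h3; simpl. field. pose proof (pos1x2 y). simpl in *. lra. Qed.

Lemma Cnorm2_add_le u v : Cnorm2 (Cadd u v) <= 2 * Cnorm2 u + 2 * Cnorm2 v.
Proof.
  destruct u as [u1 u2], v as [v1 v2]. unfold Cnorm2, Cadd; simpl.
  assert (0 <= (u1 - v1) ^ 2) by apply pow2_ge_0. assert (0 <= (u2 - v2) ^ 2) by apply pow2_ge_0.
  simpl in *. nra.
Qed.

Lemma Cnorm2_nonneg u : 0 <= Cnorm2 u.
Proof. destruct u. unfold Cnorm2; simpl. nra. Qed.

Lemma improper_dom_shift (g : R -> R) K p : (forall x, continuous g x) ->
  (forall x, Rabs (g x) <= K / (1 + x ^ 2)) -> exists l, improper_int (fun x => g (x - p)) l.
Proof.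
  intros Hc Hd. destruct (improper_dom g K) as [l Hl]; auto.
  intros; apply exRc; auto. exists l. apply improper_shift; auto.
Qed.

Lemma has_FT_Ew_shift T a w t p xi z : has_FT T xi z ->
  has_FT (fun x => Cmul (Ew a w t) (T (x - p))) xi (Cmul (Ew a w t) (Cmul (Cexpi (- (p * xi))) z)).
Proof.
  intros H. apply has_FT_scal. apply has_FT_shift. auto.
Qed.

Definition Wf a w c t x : Cplx :=
  Cmul (Ew a w t) (Cadd (Cmul (0, - w) (h1 (x - c * t))) (Cscale c (h3 (x - c * t)))).

Lemma wave_Ew a w c t x : wave a w c t x = Cmul (Ew a w t) (h1 (x - c * t)).
Proof. reflexivity. Qed.

Lemma wave_deriv a w c t x :
  derivable_pt_lim (fun tau => fst (wave a w c tau x)) t (fst (Wf a w c t x)) /\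
  derivable_pt_lim (fun tau => snd (wave a w c tau x)) t (snd (Wf a w c t x)).
Proof.
  split; apply is_derive_Reals; unfold wave, Wf, Ew, Cmul, Cadd, Cscale, Cexpi, h1, h3; simpl;
  auto_derive; try (pose proof (pos1x2 (x - c * t)); simpl in *; sd);
  field; pose proof (pos1x2 (x - c * t)); simpl in *; sd.
Qed.

Lemma wave_L2 a w c t : L2 (wave a w c t).
Proof.
  destruct (improper_dom_shift (fun y => a ^ 2 * (1 / (1 + y ^ 2))) (a ^ 2) (c * t)) as [l Hl].
  - intros y. apply contR. pose proof (pos1x2 y). auto_derive. sd.
  - intros y. rewrite Rabs_right. right; field. pose proof (pos1x2 y); lra.
    apply Rle_ge, Rmult_le_pos. apply pow2_ge_0. left; apply Rdiv_lt_0_compat; [lra|apply pos1x2].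
  - exists l. apply improper_ext with (2 := Hl). intros x.
    rewrite wave_Ew, Cnorm2_mul, Cnorm2_Ew, Cnorm2_h1. reflexivity.
Qed.

Definition Vw (w c y : R) : Cplx := Cadd (Cmul (0, - w) (h1 y)) (Cscale c (h3 y)).

Lemma W_L2 a w c t : L2 (Wf a w c t).
Proof.
  destruct (improper_dom_shift (fun y => Cnorm2 (Cmul (Ew a w t) (Vw w c y)))
      (a ^ 2 * (2 * w ^ 2 + 2 * c ^ 2)) (c * t)) as [l Hl].
  - intros y. apply contR. unfold Cnorm2, Cmul, Ew, Vw, Cadd, Cscale, Cexpi, h1, h3; simpl.
    pose proof (pos1x2 y). auto_derive. simpl in *; sd.
  - intros y. rewrite Rabs_right by (apply Rle_ge, Cnorm2_nonneg).
    rewrite Cnorm2_mul, Cnorm2_Ew. unfold Vw.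
    assert (A := Cnorm2_add_le (Cmul (0, - w) (h1 y)) (Cscale c (h3 y))).
    assert (B1 : Cnorm2 (Cmul (0, - w) (h1 y)) = w ^ 2 * (1 / (1 + y ^ 2))).
    { rewrite Cnorm2_mul, Cnorm2_h1. unfold Cnorm2; simpl. ring. }
    assert (B2 : Cnorm2 (Cscale c (h3 y)) <= c ^ 2 * (1 / (1 + y ^ 2))).
    { replace (Cnorm2 (Cscale c (h3 y))) with (c ^ 2 * Cnorm2 (h3 y)).
      2:{ destruct (h3 y). unfold Cnorm2, Cscale; simpl. ring. }
      rewrite Cnorm2_h3. apply Rmult_le_compat_l. apply pow2_ge_0.
      pose proof (pos1x2 y). apply Rmult_le_compat_l. lra.
      apply Rinv_le_contravar. lra. simpl. assert (0 <= y * y) by nra. nra. }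
    assert (0 <= a ^ 2) by apply pow2_ge_0.
    apply Rle_trans with (a ^ 2 * (2 * (w ^ 2 * (1 / (1 + y ^ 2))) + 2 * (c ^ 2 * (1 / (1 + y ^ 2))))).
    apply Rmult_le_compat_l; auto. lra.
    right. field. pose proof (pos1x2 y); lra.
  - exists l. apply improper_ext with (2 := Hl). intros x. reflexivity.
Qed.

Definition Tq a y : Cplx :=
  Cadd (Cmul (a ^ 2 / 4, 0) (h1 y)) (Cmul (1, 0) (Cadd (Cmul (- (a ^ 2 / 4), 0) (h2 y)) (Cmul (0, a ^ 2 / 2) (h3 y)))).
Definition Tw w c y : Cplx := Cadd (Cmul (w, 0) (h1 y)) (Cmul (0, c) (h3 y)).

Lemma cubic_eq a w c t x :
  Cscale (Cnorm2 (wave a w c t x)) (wave a w c t x) = Cmul (Ew a w t) (Tq a (x - c * t)).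
Proof.
  rewrite wave_Ew, Cnorm2_mul, Cnorm2_Ew, Cnorm2_h1.
  set (y := x - c * t). destruct (Ew a w t) as [e1 e2].
  unfold Tq, Cscale, Cmul, Cadd, h1, h2, h3; simpl. pose proof (pos1x2 y).
  apply pair_eq; field; simpl in *; sd.
Qed.

Lemma iW_eq a w c t x : Cmul Ci (Wf a w c t x) = Cmul (Ew a w t) (Tw w c (x - c * t)).
Proof.
  unfold Wf, Tw. destruct (Ew a w t) as [e1 e2]. destruct (h1 (x - c * t)), (h3 (x - c * t)).
  unfold Ci, Cmul, Cadd, Cscale; simpl. apply pair_eq; ring.
Qed.

Lemma FT_Tq a xi : xi <> 0 -> has_FT (Tq a) xi
  (Cadd (Cmul (a ^ 2 / 4, 0) (0, - Qv xi)) (Cmul (1, 0) (Cadd (Cmul (- (a ^ 2 / 4), 0) (0, Qv (- xi))) (Cmul (0, a ^ 2 / 2) (- xi * Qv xi, 0))))).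
Proof.
  intros H. apply has_FT_lin. apply FT_h1; auto. apply has_FT_lin. apply FT_h2; auto. apply FT_h3; auto.
Qed.

Lemma FT_Tw w c xi : xi <> 0 -> has_FT (Tw w c) xi
  (Cadd (Cmul (w, 0) (0, - Qv xi)) (Cmul (0, c) (- xi * Qv xi, 0))).
Proof. intros H. apply has_FT_lin. apply FT_h1; auto. apply FT_h3; auto. Qed.

Lemma wave_Pi a w c t : w = a ^ 2 / 4 -> c = a ^ 2 / 2 ->
  is_Pi_plus (fun x => Cscale (Cnorm2 (wave a w c t x)) (wave a w c t x))
             (fun x => Cmul Ci (Wf a w c t x)).
Proof.
  intros Hw Hc xi Hxi.
  eexists. split.
  - apply has_FT_ext with (fun x => Cmul (Ew a w t) (Tq a (x - c * t))).
    intros; symmetry; apply cubic_eq.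
    apply has_FT_Ew_shift. apply FT_Tq; auto.
  - apply has_FT_ext with (fun x => Cmul (Ew a w t) (Tw w c (x - c * t))).
    intros; symmetry; apply iW_eq.
    eapply has_FT_val; [|apply has_FT_Ew_shift; apply FT_Tw; auto].
    destruct (Rle_dec 0 xi); cbv iota beta.
    + rewrite (Qv_neg (- xi)) by lra. f_equal. f_equal.
      unfold Cmul, Cadd; cbn [fst snd]. subst. apply pair_eq; ring.
    + rewrite (Qv_neg xi) by lra. destruct (Ew a w t). unfold Cmul, Cadd, Cexpi, C0; cbn [fst snd]. apply pair_eq; ring.
Qed.

Lemma wave_Hs_plus s a w c t : in_Hs_plus s (wave a w c t).
Proof.
  split; [apply wave_L2|]. split.
  - intros xi Hxi. eapply has_FT_val; [|apply FT_wave; lra].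
    unfold Hc. destruct (Rlt_dec 0 xi); [lra|]. destruct (Aw a w c t xi). unfold Cmul, C0; simpl. apply pair_eq; ring.
  - exists (Rabs a * mu s). apply wave_norm.
Qed.

Lemma wave_szego s a : szego_solution s (fun t x => wave a (a ^ 2 / 4) (a ^ 2 / 2) t x).
Proof.
  split; [intros t; apply wave_Hs_plus|]. split.
  - intros t0 e He. apply wave_cont; auto.
  - exists (Wf a (a ^ 2 / 4) (a ^ 2 / 2)). split.
    + intros t x. apply wave_deriv.
    + intros t. split. apply W_L2. apply wave_Pi; auto.
Qed.


Theorem proposition2p3 :
  forall s delta : R, -1/2 < s -> 0 < delta ->
  exists eps0, 0 < eps0 /\
  exists K, 0 < K /\
  forall eps, 0 < eps < eps0 ->
  exists V1 V2 : R -> R -> Cplx,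
    szego_solution s V1 /\ szego_solution s V2 /\
    (exists N1 N2, Hs_norm_is s (V1 0) N1 /\ Hs_norm_is s (V2 0) N2 /\
                   N1 + N2 <= K * eps) /\
    (exists D, Hs_norm_is s (fun x => Csub (V1 0 x) (V2 0 x)) D /\
               eps / sqrt (Rabs (ln eps)) / K <= D /\
               D <= K * (eps / sqrt (Rabs (ln eps)))) /\
    (forall t, delta / eps ^ 2 * Rabs (ln eps) <= t ->
       exists D, Hs_norm_is s (fun x => Csub (V1 t x) (V2 t x)) D /\
                 eps / K <= D).
Proof.
  intros s delta Hs Hd.
  set (L0 := 1 + 16 / delta ^ 2).
  assert (HL0 : 1 <= L0) by (unfold L0; assert (0 < 16 / delta ^ 2) by (apply Rdiv_lt_0_compat; [lra|apply pow_lt; lra]); lra).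
  exists (exp (- L0)). split. apply exp_pos.
  assert (HPI := PI_RGT_0).
  set (nu := kappa * sqrt (mlow s / (2 * PI))).
  assert (Hnu : 0 < nu).
  { unfold nu. apply Rmult_lt_0_compat. apply kappa_pos. apply sqrt_lt_R0.
    apply Rdiv_lt_0_compat. apply mlow_pos. lra. }
  assert (Hmu := mu_pos s).
  set (K := 3 * mu s + / mu s + / nu + 1).
  assert (Hi1 : 0 < / mu s) by (apply Rinv_0_lt_compat; auto).
  assert (Hi2 : 0 < / nu) by (apply Rinv_0_lt_compat; auto).
  exists K. split. unfold K; lra.
  intros eps [He1 He2].
  assert (Hln : ln eps < - L0).
  { rewrite <- (ln_exp (- L0)). apply ln_increasing; auto. }
  set (L := Rabs (ln eps)).
  assert (HL : L0 < L) by (unfold L; rewrite Rabs_left; lra).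
  set (sL := sqrt L).
  assert (HsL0 : 0 < sL) by (apply sqrt_lt_R0; lra).
  assert (HsLL : sL * sL = L) by (apply sqrt_sqrt; lra).
  assert (HsL1 : 1 <= sL) by nra.
  set (d := eps / sL).
  assert (Hd0 : 0 < d) by (unfold d; apply Rdiv_lt_0_compat; lra).
  assert (Hde : d <= eps).
  { unfold d. apply Rmult_le_reg_r with sL; auto. unfold Rdiv. rewrite Rmult_assoc, Rinv_l by lra. nra. }
  set (a2 := eps + d).
  exists (fun t x => wave eps (eps ^ 2 / 4) (eps ^ 2 / 2) t x).
  exists (fun t x => wave a2 (a2 ^ 2 / 4) (a2 ^ 2 / 2) t x).
  split; [apply wave_szego|]. split; [apply wave_szego|].
  split.
  { exists (Rabs eps * mu s), (Rabs a2 * mu s). split; [apply wave_norm|]. split; [apply wave_norm|].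
    rewrite (Rabs_right eps), (Rabs_right a2) by (unfold a2; lra).
    apply Rle_trans with (3 * mu s * eps). unfold a2. nra.
    apply Rmult_le_compat_r; [lra|]. unfold K; lra. }
  split.
  { exists (Rabs (eps - a2) * mu s). split. apply wave_norm0.
    replace (Rabs (eps - a2)) with d by (unfold a2; rewrite Rabs_left by lra; ring).
    fold L. fold sL. fold d. split.
    - unfold Rdiv. apply Rmult_le_compat_l; [lra|].
      apply Rle_trans with (/ / mu s). apply Rinv_le_contravar; auto. unfold K; lra.
      rewrite Rinv_inv. lra.
    - rewrite Rmult_comm. apply Rmult_le_compat_r; [lra|]. unfold K; lra. }
  intros t Ht.
  destruct (qd_exists s eps (eps ^ 2 / 4) (eps ^ 2 / 2) t a2 (a2 ^ 2 / 4) (a2 ^ 2 / 2) t) as [I HI].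
  exists (sqrt (I / (2 * PI))). split. apply wave_diff_norm; auto.
  assert (Hb : 4 <= (a2 ^ 2 / 2 - eps ^ 2 / 2) * t).
  { fold L in Ht.
    assert (Ht' : delta * L / eps ^ 2 <= t) by (unfold Rdiv in *; lra).
    assert (E1 : a2 ^ 2 / 2 - eps ^ 2 / 2 >= eps ^ 2 / sL).
    { unfold a2, d. apply Rle_ge. unfold Rdiv.
      replace ((eps + eps * / sL) ^ 2 * / 2 - eps ^ 2 * / 2) with (eps ^ 2 * / sL + eps ^ 2 * / sL * / sL * / 2) by (field; lra).
      assert (0 <= eps ^ 2 * / sL * / sL * / 2).
      { repeat apply Rmult_le_pos; try (left; apply Rinv_0_lt_compat); try lra; apply pow2_ge_0. }
      lra. }
    assert (Ht0 : 0 <= t).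
    { eapply Rle_trans; [|exact Ht']. apply Rdiv_le_0_compat. apply Rmult_le_pos; lra. apply pow_lt; lra. }
    apply Rle_trans with (eps ^ 2 / sL * t).
    2:{ apply Rmult_le_compat_r; lra. }
    apply Rle_trans with (eps ^ 2 / sL * (delta * L / eps ^ 2)).
    2:{ apply Rmult_le_compat_l; auto. apply Rdiv_le_0_compat; [apply pow2_ge_0|lra]. }
    replace (eps ^ 2 / sL * (delta * L / eps ^ 2)) with (delta * sL).
    2:{ rewrite <- HsLL. field. split; lra. }
    assert (HsL4 : 4 / delta <= sL).
    { apply Rnot_lt_le. intros Hlt.
      assert (sL * sL < 4 / delta * (4 / delta)) by nra.
      assert (4 / delta * (4 / delta) = 16 / delta ^ 2) by (field; lra).
      unfold L0 in HL. lra. }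
    apply Rmult_le_reg_r with (/ delta). apply Rinv_0_lt_compat; lra.
    replace (delta * sL * / delta) with sL by (field; lra). unfold Rdiv in HsL4. lra. }
  assert (F := wave_far s eps a2 (eps ^ 2 / 4) (eps ^ 2 / 2) (a2 ^ 2 / 4) (a2 ^ 2 / 2) t
      ltac:(unfold a2; lra) Hb I HI).
  fold nu in F.
  apply Rle_trans with (eps * nu); auto.
  unfold Rdiv. apply Rmult_le_compat_l; [lra|].
  apply Rle_trans with (/ / nu). apply Rinv_le_contravar; auto. unfold K; lra.
  rewrite Rinv_inv. lra.
Qed.
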